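(* Let $\Lambda$ be a finite $k$-graph each of whose coordinate matrices $A_1,\dots,A_k$ is irreducible. Suppose there exist an $\mathbb{R}_+$-functor $y$ on $\Lambda$ and $\beta\in(0,\infty)$ such that for all $\lambda,\nu\in\Lambda$, $$y(\lambda)+\tfrac1\beta\ln\big(\rho(B(y,\beta))^{d(\lambda)}\big)=y(\nu)+\tfrac1\beta\ln\big(\rho(B(y,\beta))^{d(\nu)}\big)\ \Longrightarrow\ d(\lambda)=d(\nu).$$ Then $\Lambda$ is aperiodic.
   Context: A $k$-graph is a countable small category $\Lambda$ with a degree functor $d:\Lambda\to\mathbb{N}^k$ satisfying unique factorization: if $d(\lambda)=m+n$ there are unique $\eta,\nu$ with $\lambda=\eta\nu$, $d(\eta)=m$, $d(\nu)=n$. $\Lambda^n=d^{-1}(n)$, $\Lambda^0$ = vertices, $r,s$ range/source, $v\Lambda^nw$ paths of degree $n$ from $w$ to $v$; finite: each $\Lambda^n$ finite. Coordinate matrices: $A_i(v,w)=|v\Lambda^{e_i}w|$; a square nonnegative matrix is irreducible if for every pair of indices $(v,w)$ some power has positive $(v,w)$ entry. (Coordinatewise irreducibility implies $\Lambda$ is strongly connected, i.e. $v\Lambda w\neq\emptyset$ for all vertices.) An $\mathbb{R}_+$-functor is $y:\Lambda\to[0,\infty)$ with $y(v)=0$ on vertices and $y(\lambda\nu)=y(\lambda)+y(\nu)$ when $s(\lambda)=r(\nu)$. $B_i(y,\beta)_{v,w}=\sum_{\lambda\in v\Lambda^{e_i}w}e^{-\beta y(\lambda)}$; $\rho$ = spectral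 radius ($>0$); $\rho(B(y,\beta))^m=\prod_i\rho(B_i(y,\beta))^{m_i}$. $\Lambda^\infty$: degree-preserving functors from $\Omega_k$ (objects $\mathbb{N}^k$, morphisms $(m,n)$, $m\le n$, $d(m,n)=n-m$) into $\Lambda$; $Z(v)=\{x:x(0,0)=v\}$; $\sigma^j(x)(m,n)=x(m+j,n+j)$. $\mathrm{Per}(v)$ is the subgroup of $\mathbb{Z}^k$ generated by $\{m-n:\sigma^m(x)=\sigma^n(x)\ \forall x\in Z(v)\}$; for strongly connected finite $\Lambda$ it is independent of $v$, denoted $\mathrm{Per}\,\Lambda$; $\Lambda$ is aperiodic iff $\mathrm{Per}\,\Lambda=\{0\}$. *)

(* Defs.v *)
From Stdlib Require Import Reals List ZArith.
Open Scope R_scope.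

Definition isNk (k : nat) (m : nat -> nat) : Prop := forall i, (k <= i)%nat -> m i = 0%nat.
Definition leN (m n : nat -> nat) : Prop := forall i, (m i <= n i)%nat.
Definition addN (m n : nat -> nat) : nat -> nat := fun i => (m i + n i)%nat.
Definition zeroN : nat -> nat := fun _ => 0%nat.
Definition unitN (i : nat) : nat -> nat := fun j => if Nat.eqb j i then 1%nat else 0%nat.

Record kgraph_data := {
  Obj : Type;
  Mor : Type;
  obj_eq_dec : forall u v : Obj, {u = v} + {u <> v};
  rng : Mor -> Obj;
  src : Mor -> Obj;
  comp : Mor -> Mor -> Mor;          (* comp a b = a b, meaningful when src a = rng b *)
  idm : Obj -> Mor;
  deg : Mor -> nat -> nat;
  verts : list Obj;
  paths : (nat -> nat) -> list Mor
}.
Arguments rng {_}. Arguments src {_}. Arguments comp {_}. Arguments idm {_}.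
Arguments deg {_}. Arguments verts {_}. Arguments paths {_}. Arguments obj_eq_dec {_}.

Definition is_finite_kgraph (k : nat) (G : kgraph_data) : Prop :=
  (forall v : Obj G, rng (idm v) = v /\ src (idm v) = v) /\
  (forall a b : Mor G, src a = rng b -> rng (comp a b) = rng a /\ src (comp a b) = src b) /\
  (forall a b c : Mor G, src a = rng b -> src b = rng c ->
       comp (comp a b) c = comp a (comp b c)) /\
  (forall a : Mor G, comp (idm (rng a)) a = a /\ comp a (idm (src a)) = a) /\
  (exists f : Mor G -> nat, forall a b, f a = f b -> a = b) /\
  (forall a : Mor G, isNk k (deg a)) /\
  (forall v : Obj G, forall i, deg (idm v) i = 0%nat) /\
  (forall a b : Mor G, src a = rng b -> forall i, deg (comp a b) i = (deg a i + deg b i)%nat) /\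
  (forall (lam : Mor G) (m n : nat -> nat), isNk k m -> isNk k n ->
     (forall i, deg lam i = (m i + n i)%nat) ->
     exists eta nu : Mor G,
       src eta = rng nu /\ lam = comp eta nu /\
       (forall i, deg eta i = m i) /\ (forall i, deg nu i = n i) /\
       (forall eta' nu' : Mor G, src eta' = rng nu' -> lam = comp eta' nu' ->
          (forall i, deg eta' i = m i) -> (forall i, deg nu' i = n i) ->
          eta' = eta /\ nu' = nu)) /\
  NoDup (@verts G) /\ (forall v : Obj G, In v verts) /\
  (forall n, isNk k n -> NoDup (@paths G n) /\
     forall lam : Mor G, In lam (paths n) <-> (forall i, deg lam i = n i)).

Definition mat (G : kgraph_data) := Obj G -> Obj G -> R.

Definition sumV (G : kgraph_data) (f : Obj G -> R) : R :=
  fold_right Rplus 0 (map f (@verts G)).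

Definition mmul {G : kgraph_data} (A B : mat G) : mat G :=
  fun v w => sumV G (fun u => A v u * B u w).

Definition mid (G : kgraph_data) : mat G :=
  fun v w => if obj_eq_dec v w then 1 else 0.

Fixpoint mpow {G : kgraph_data} (A : mat G) (n : nat) : mat G :=
  match n with O => mid G | S n' => mmul A (mpow A n') end.

Definition irreducible {G : kgraph_data} (A : mat G) : Prop :=
  forall v w : Obj G, exists n : nat, (1 <= n)%nat /\ 0 < mpow A n v w.

Definition inVW {G : kgraph_data} (v w : Obj G) (lam : Mor G) : bool :=
  if obj_eq_dec (rng lam) v then (if obj_eq_dec (src lam) w then true else false) else false.

Definition coord_mat (G : kgraph_data) (i : nat) : mat G :=
  fun v w => INR (length (filter (inVW v w) (@paths G (unitN i)))).

Definition Bmat (G : kgraph_data) (y : Mor G -> R) (beta : R) (i : nat) : mat G :=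
  fun v w => fold_right Rplus 0
    (map (fun lam => exp (- beta * y lam)) (filter (inVW v w) (@paths G (unitN i)))).

(* a + ib is a (complex) eigenvalue of A: A (x + i z) = (a + i b)(x + i z), x + i z <> 0 *)
Definition is_eigenvalue {G : kgraph_data} (A : mat G) (a b : R) : Prop :=
  exists x z : Obj G -> R,
    (exists v, x v <> 0 \/ z v <> 0) /\
    forall v, sumV G (fun u => A v u * x u) = a * x v - b * z v /\
              sumV G (fun u => A v u * z u) = a * z v + b * x v.

Definition is_spectral_radius {G : kgraph_data} (A : mat G) (r : R) : Prop :=
  is_lub (fun t => exists a b, is_eigenvalue A a b /\ t = sqrt (a ^ 2 + b ^ 2)) r.

(* rho(B)^m := prod_i rho(B_i)^{m_i}, given rho i = rho(B_i) *)
Definition rho_pow (k : nat) (rho : nat -> R) (m : nat -> nat) : R :=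
  fold_right Rmult 1 (map (fun i => rho i ^ m i) (seq 0 k)).

Definition is_Rplus_functor {G : kgraph_data} (y : Mor G -> R) : Prop :=
  (forall lam, 0 <= y lam) /\
  (forall v : Obj G, y (idm v) = 0) /\
  (forall a b : Mor G, src a = rng b -> y (comp a b) = y a + y b).

(* x : Omega_k -> Lambda degree-preserving functor; x m n is the image of the
   morphism (m,n) of Omega_k (only meaningful for m <= n in N^k) *)
Definition is_inf_path (k : nat) (G : kgraph_data)
    (x : (nat -> nat) -> (nat -> nat) -> Mor G) : Prop :=
  (forall m, isNk k m -> x m m = idm (rng (x m m))) /\
  (forall m n, isNk k m -> isNk k n -> leN m n ->
     forall i, deg (x m n) i = (n i - m i)%nat) /\
  (forall m n p, isNk k m -> isNk k n -> isNk k p -> leN m n -> leN n p ->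
     src (x m n) = rng (x n p) /\ x m p = comp (x m n) (x n p)).

(* sigma^m x = sigma^n x for all x in Z(v) *)
Definition shift_eq_on (k : nat) (G : kgraph_data) (v : Obj G) (m n : nat -> nat) : Prop :=
  forall x, is_inf_path k G x -> x zeroN zeroN = idm v ->
    forall p q, isNk k p -> isNk k q -> leN p q ->
      x (addN p m) (addN q m) = x (addN p n) (addN q n).

Inductive Per (k : nat) (G : kgraph_data) (v : Obj G) : (nat -> Z) -> Prop :=
| Per_gen : forall m n, isNk k m -> isNk k n -> shift_eq_on k G v m n ->
    Per k G v (fun i => (Z.of_nat (m i) - Z.of_nat (n i))%Z)
| Per_zero : Per k G v (fun _ => 0%Z)
| Per_add : forall z1 z2, Per k G v z1 -> Per k G v z2 -> Per k G v (fun i => (z1 i + z2 i)%Z)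
| Per_opp : forall z, Per k G v z -> Per k G v (fun i => (- z i)%Z).

Definition aperiodic (k : nat) (G : kgraph_data) : Prop :=
  forall (v : Obj G) (z : nat -> Z), Per k G v z -> forall i, z i = 0%Z.

(* Main.v *)
From Stdlib Require Import Reals List ZArith Lra Lia Permutation ClassicalEpsilon FunctionalExtensionality.
Require Import Defs.
Open Scope R_scope.

Definition dec (P : Prop) : bool := if excluded_middle_informative P then true else false.
Lemma decT (P : Prop) : dec P = true <-> P.
Proof. unfold dec; destruct (excluded_middle_informative P); split; intros; auto; discriminate || contradiction. Qed.
Lemma decF (P : Prop) : dec P = false <-> ~ P.
Proof. unfold dec; destruct (excluded_middle_informative P); split; intros; auto; try discriminate; contradiction. Qed.

Lemma dec_true (P : Prop) : dec P = true -> P. Proof. apply decT. Qed.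
Lemma dec_false (P : Prop) : dec P = false -> ~ P. Proof. apply decF. Qed.
Lemma dec_t (P : Prop) : P -> dec P = true. Proof. apply decT. Qed.
Lemma dec_f (P : Prop) : ~ P -> dec P = false. Proof. apply decF. Qed.

Definition lsum {A : Type} (l : list A) (g : A -> R) : R := fold_right Rplus 0 (map g l).

Lemma lsum_nil {A} (g : A -> R) : lsum nil g = 0. Proof. reflexivity. Qed.
Lemma lsum_cons {A} (a : A) l g : lsum (a :: l) g = g a + lsum l g. Proof. reflexivity. Qed.
Lemma lsum_app {A} (l1 l2 : list A) g : lsum (l1 ++ l2) g = lsum l1 g + lsum l2 g.
Proof. induction l1; simpl; [unfold lsum; simpl; lra|]. rewrite !lsum_cons, IHl1. lra. Qed.
Lemma lsum_ext {A} (l : list A) g h : (forall x, In x l -> g x = h x) -> lsum l g = lsum l h.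
Proof. induction l; intros H; [reflexivity|]. rewrite !lsum_cons, H, IHl; simpl; auto; intros; apply H; simpl; auto. Qed.
Lemma lsum_perm {A} (l1 l2 : list A) g : Permutation l1 l2 -> lsum l1 g = lsum l2 g.
Proof. induction 1; rewrite ?lsum_cons; try lra. Qed.
Lemma lsum_map {A B} (f : A -> B) l g : lsum (map f l) g = lsum l (fun x => g (f x)).
Proof. induction l; [reflexivity|]. simpl map. rewrite !lsum_cons, IHl. reflexivity. Qed.
Lemma lsum_plus {A} (l : list A) g h : lsum l (fun x => g x + h x) = lsum l g + lsum l h.
Proof. induction l; [unfold lsum; simpl; lra|]. rewrite !lsum_cons, IHl. lra. Qed.
Lemma lsum_scal {A} (l : list A) c g : lsum l (fun x => c * g x) = c * lsum l g.
Proof. induction l; [unfold lsum; simpl; lra|]. rewrite !lsum_cons, IHl. lra. Qed.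
Lemma lsum_scalr {A} (l : list A) c g : lsum l (fun x => g x * c) = lsum l g * c.
Proof. induction l; [unfold lsum; simpl; lra|]. rewrite !lsum_cons, IHl. lra. Qed.
Lemma lsum_zero {A} (l : list A) : lsum l (fun _ => 0) = 0.
Proof. induction l; [reflexivity|]. rewrite lsum_cons, IHl. lra. Qed.
Lemma lsum_nonneg {A} (l : list A) g : (forall x, In x l -> 0 <= g x) -> 0 <= lsum l g.
Proof. induction l; intros H; [unfold lsum; simpl; lra|]. rewrite lsum_cons.
  assert (0 <= g a) by (apply H; simpl; auto). assert (0 <= lsum l g) by (apply IHl; intros; apply H; simpl; auto). lra. Qed.
Lemma lsum_le {A} (l : list A) g h : (forall x, In x l -> g x <= h x) -> lsum l g <= lsum l h.
Proof. induction l; intros H; [unfold lsum; simpl; lra|]. rewrite !lsum_cons.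
  assert (g a <= h a) by (apply H; simpl; auto). assert (lsum l g <= lsum l h) by (apply IHl; intros; apply H; simpl; auto). lra. Qed.
Lemma lsum_ge_term {A} (l : list A) g a : (forall x, In x l -> 0 <= g x) -> In a l -> g a <= lsum l g.
Proof. induction l; intros H Ha; [destruct Ha|]. rewrite lsum_cons. destruct Ha as [<-|Ha].
  - assert (0 <= lsum l g) by (apply lsum_nonneg; intros; apply H; simpl; auto). lra.
  - assert (0 <= g a0) by (apply H; simpl; auto). assert (g a <= lsum l g) by (apply IHl; auto; intros; apply H; simpl; auto). lra. Qed.
Lemma lsum_pos {A} (l : list A) g a : (forall x, In x l -> 0 <= g x) -> In a l -> 0 < g a -> 0 < lsum l g.
Proof. intros H Ha Hg. pose proof (lsum_ge_term l g a H Ha). lra. Qed.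
Lemma lsum_pos_inv {A} (l : list A) g : 0 < lsum l g -> exists a, In a l /\ 0 < g a.
Proof. intros H. destruct (classic (exists a, In a l /\ 0 < g a)) as [?|Hn]; auto.
  exfalso. assert (lsum l g <= lsum l (fun _ => 0)). { apply lsum_le. intros x Hx. apply Rnot_lt_le. intro. apply Hn. eauto. }
  rewrite lsum_zero in H0. lra. Qed.
Lemma lsum_filter {A} (p : A -> bool) l g : lsum (filter p l) g = lsum l (fun x => if p x then g x else 0).
Proof. induction l; [reflexivity|]. simpl filter. destruct (p a) eqn:E; rewrite ?lsum_cons, IHl, ?E; lra. Qed.
Lemma lsum_swap {A B} (l1 : list A) (l2 : list B) g :
  lsum l1 (fun a => lsum l2 (fun b => g a b)) = lsum l2 (fun b => lsum l1 (fun a => g a b)).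
Proof. induction l1; simpl. - rewrite lsum_nil. symmetry. apply lsum_zero.
  - rewrite lsum_cons, IHl1, <- lsum_plus. reflexivity. Qed.
Lemma lsum_flat_map {A B} (f : A -> list B) l g : lsum (flat_map f l) g = lsum l (fun a => lsum (f a) g).
Proof. induction l; [reflexivity|]. simpl. rewrite lsum_app, lsum_cons, IHl. reflexivity. Qed.

Lemma lsum_bij {A B} (l1 : list A) (l2 : list B) (f : A -> B) g :
  NoDup l1 -> NoDup l2 -> (forall x y, In x l1 -> In y l1 -> f x = f y -> x = y) ->
  (forall x, In x l1 -> In (f x) l2) -> (forall y, In y l2 -> exists x, In x l1 /\ f x = y) ->
  lsum l2 g = lsum l1 (fun x => g (f x)).
Proof. intros N1 N2 Hi H1 H2. rewrite <- (lsum_map f l1 g). apply lsum_perm. apply NoDup_Permutation; auto.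
  - apply FinFun.Injective_map_NoDup_in; auto.
  - intros y; split; [intros Hy; destruct (H2 y Hy) as [x [Hx <-]]; apply in_map; auto|].
    intros Hy. apply in_map_iff in Hy. destruct Hy as [x [<- Hx]]. auto. Qed.

Lemma lsum_delta {A} (l : list A) (a : A) (c : A -> R) : NoDup l -> In a l ->
  lsum l (fun x => if dec (a = x) then c x else 0) = c a.
Proof. induction l; intros N Ha; [destruct Ha|]. rewrite lsum_cons. inversion N; subst.
  destruct Ha as [<-|Ha].
  - assert (dec (a0 = a0) = true) by (apply decT; auto). rewrite H.
    rewrite (lsum_ext _ _ (fun _ => 0)), lsum_zero; [lra|]. intros x Hx. destruct (dec (a0 = x)) eqn:E; auto.
    apply dec_true in E; subst; tauto.
  - assert (dec (a = a0) = false) by (apply decF; intros ->; tauto). rewrite H, IHl; auto. lra. Qed.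

Lemma lsum_eq_zero_nonneg {A} (l : list A) g a : (forall x, In x l -> 0 <= g x) -> lsum l g = 0 -> In a l -> g a = 0.
Proof. intros H Hs Ha. pose proof (lsum_ge_term l g a H Ha). pose proof (H a Ha). lra. Qed.

Lemma NoDup_flat_map' {A B} (f : A -> list B) l : NoDup l -> (forall a, In a l -> NoDup (f a)) ->
  (forall a b x, In a l -> In b l -> In x (f a) -> In x (f b) -> a = b) -> NoDup (flat_map f l).
Proof. induction l; intros N H1 H2; simpl; [constructor|]. inversion N; subst.
  apply NoDup_app; [apply H1; simpl; auto| apply IHl; auto; intros; [apply H1|eapply H2]; simpl; eauto|].
  intros x Hx Hx'. apply in_flat_map in Hx'. destruct Hx' as [b [Hb Hxb]].
  assert (a = b) by (eapply H2; simpl; eauto). subst. contradiction. Qed.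

Section KG.
Variable k : nat.
Variable G : kgraph_data.
Hypothesis HG : is_finite_kgraph k G.

Lemma idm_rng v : rng (@idm G v) = v. Proof. apply (proj1 HG). Qed.
Lemma idm_src v : src (@idm G v) = v. Proof. apply (proj1 HG). Qed.
Lemma comp_rng (a b : Mor G) : src a = rng b -> rng (comp a b) = rng a. Proof. intro H; apply (proj1 (proj2 HG) a b H). Qed.
Lemma comp_src (a b : Mor G) : src a = rng b -> src (comp a b) = src b. Proof. intro H; apply (proj1 (proj2 HG) a b H). Qed.
Lemma comp_assoc (a b c : Mor G) : src a = rng b -> src b = rng c -> comp (comp a b) c = comp a (comp b c).
Proof. apply (proj1 (proj2 (proj2 HG))). Qed.
Lemma comp_idl (a : Mor G) : comp (idm (rng a)) a = a. Proof. apply (proj1 (proj2 (proj2 (proj2 HG)))). Qed.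
Lemma comp_idr (a : Mor G) : comp a (idm (src a)) = a. Proof. apply (proj1 (proj2 (proj2 (proj2 HG)))). Qed.
Lemma deg_isNk (a : Mor G) : isNk k (deg a). Proof. apply HG. Qed.
Lemma deg_idm v i : deg (@idm G v) i = 0%nat. Proof. apply HG. Qed.
Lemma deg_comp (a b : Mor G) : src a = rng b -> forall i, deg (comp a b) i = (deg a i + deg b i)%nat.
Proof. apply HG. Qed.
Lemma UF : forall (lam : Mor G) (m n : nat -> nat), isNk k m -> isNk k n ->
     (forall i, deg lam i = (m i + n i)%nat) ->
     exists eta nu : Mor G,
       src eta = rng nu /\ lam = comp eta nu /\
       (forall i, deg eta i = m i) /\ (forall i, deg nu i = n i) /\
       (forall eta' nu' : Mor G, src eta' = rng nu' -> lam = comp eta' nu' ->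
          (forall i, deg eta' i = m i) -> (forall i, deg nu' i = n i) ->
          eta' = eta /\ nu' = nu).
Proof. apply HG. Qed.
Lemma verts_nodup : NoDup (@verts G). Proof. apply HG. Qed.
Lemma verts_all v : In v (@verts G). Proof. apply HG. Qed.
Lemma paths_nodup n : isNk k n -> NoDup (@paths G n). Proof. intro H; apply HG; auto. Qed.
Lemma paths_in n lam : isNk k n -> In lam (@paths G n) <-> (forall i, deg lam i = n i).
Proof. intro H; apply HG; auto. Qed.

Ltac pdeg H Hn := let H' := fresh in pose proof (proj1 (paths_in _ _ Hn) H) as H'; clear H; rename H' into H.

Definition fspec (lam : Mor G) (m : nat -> nat) (p : Mor G * Mor G) : Prop :=
  src (fst p) = rng (snd p) /\ lam = comp (fst p) (snd p) /\ forall i, deg (fst p) i = m i.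

Definition fact (lam : Mor G) (m : nat -> nat) : Mor G * Mor G :=
  match excluded_middle_informative (exists p, fspec lam m p) with
  | left H => proj1_sig (constructive_indefinite_description _ H)
  | right _ => (lam, lam) end.

Lemma fact_spec lam m : (exists p, fspec lam m p) -> fspec lam m (fact lam m).
Proof. intro H. unfold fact. destruct (excluded_middle_informative _); [|contradiction].
  apply (proj2_sig (constructive_indefinite_description _ e)). Qed.

Lemma fact_unique lam m eta nu : isNk k m -> fspec lam m (eta, nu) -> fact lam m = (eta, nu).
Proof. intros Hm Hs. assert (Hf := fact_spec lam m (ex_intro _ _ Hs)).
  destruct (fact lam m) as [eta' nu']. destruct Hs as (S1 & L1 & D1). destruct Hf as (S2 & L2 & D2). simpl in *.
  assert (Hd : forall i, deg lam i = (m i + deg nu i)%nat).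
  { intro i. rewrite L1, deg_comp by auto. rewrite D1. auto. }
  destruct (UF lam m (deg nu) Hm (deg_isNk nu) Hd) as (e0 & n0 & _ & _ & _ & _ & U).
  destruct (U eta nu S1 L1 D1 (fun i => eq_refl)) as [-> ->].
  destruct (U eta' nu' S2 L2 D2) as [-> ->]; auto.
  intro i. pose proof (Hd i). rewrite L2, deg_comp in H by auto. rewrite D2 in H. lia. Qed.

Lemma isNk_sub m n : isNk k m -> isNk k n -> isNk k (fun i => (m i - n i)%nat).
Proof. intros H1 H2 i Hi. rewrite H1; auto. Qed.
Lemma isNk_add m n : isNk k m -> isNk k n -> isNk k (addN m n).
Proof. intros H1 H2 i Hi. unfold addN. rewrite H1, H2; auto. Qed.
Lemma isNk_zero : isNk k zeroN. Proof. intros i _; reflexivity. Qed.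

Lemma fact_exists lam m : isNk k m -> (forall i, (m i <= deg lam i)%nat) -> exists p, fspec lam m p.
Proof. intros Hm Hle. destruct (UF lam m (fun i => (deg lam i - m i)%nat) Hm (isNk_sub _ _ (deg_isNk lam) Hm))
  as (e & n & S & L & D & _ & _); [intro i; specialize (Hle i); lia|].
  exists (e, n). split; auto. Qed.

Definition pre m lam := fst (fact lam m).
Definition suf m lam := snd (fact lam m).

Lemma pre_suf m lam : isNk k m -> (forall i, (m i <= deg lam i)%nat) ->
  src (pre m lam) = rng (suf m lam) /\ lam = comp (pre m lam) (suf m lam) /\
  (forall i, deg (pre m lam) i = m i) /\ (forall i, deg (suf m lam) i = (deg lam i - m i)%nat).
Proof. intros Hm Hle. pose proof (fact_spec lam m (fact_exists lam m Hm Hle)) as (S & L & D).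
  unfold pre, suf. split; auto. split; auto. split; auto. intro i. pose proof (f_equal (fun l => deg l i) L) as E.
  simpl in E. rewrite deg_comp in E by auto. rewrite D in E. lia. Qed.

Lemma pre_exact m a b : isNk k m -> src a = rng b -> (forall i, deg a i = m i) ->
  pre m (comp a b) = a /\ suf m (comp a b) = b.
Proof. intros Hm S D. unfold pre, suf. rewrite (fact_unique (comp a b) m a b); auto. split; auto. Qed.

Lemma pre_comp m a b : isNk k m -> (forall i, (m i <= deg a i)%nat) -> src a = rng b ->
  pre m (comp a b) = pre m a /\ suf m (comp a b) = comp (suf m a) b.
Proof. intros Hm Hle S. destruct (pre_suf m a Hm Hle) as (S1 & L1 & D1 & _).
  assert (Ssuf : src (suf m a) = rng b). { rewrite <- S. rewrite L1 at 2. rewrite comp_src; auto. }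
  assert (E : comp a b = comp (pre m a) (comp (suf m a) b)).
  { rewrite L1 at 1. apply comp_assoc; auto. }
  rewrite E. apply pre_exact; auto. rewrite comp_rng; auto. Qed.

Lemma deg0_idm lam : (forall i, deg lam i = 0%nat) -> lam = @idm G (rng lam).
Proof. intro H0. destruct (UF lam zeroN zeroN isNk_zero isNk_zero) as (e & n & _ & _ & _ & _ & U).
  { intro i. rewrite H0. reflexivity. }
  destruct (U (idm (rng lam)) lam) as [E1 _]; auto.
  { rewrite idm_src; auto. } { rewrite comp_idl; auto. } { intro; apply deg_idm. }
  destruct (U lam (idm (src lam))) as [E2 _]; auto.
  { rewrite idm_rng; auto. } { rewrite comp_idr; auto. } { intro; apply deg_idm. }
  congruence. Qed.

Definition PS (n : nat -> nat) (v : Obj G) (h : Mor G -> R) : R :=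
  lsum (filter (fun l => dec (rng l = v)) (paths n)) h.

Lemma PS_ext n v h1 h2 : isNk k n -> (forall l, (forall i, deg l i = n i) -> rng l = v -> h1 l = h2 l) -> PS n v h1 = PS n v h2.
Proof. intros Hn H. apply lsum_ext. intros x Hx. apply filter_In in Hx. destruct Hx as [Hx Hr].
  apply dec_true in Hr. pdeg Hx Hn. auto. Qed.

Lemma PS_add p q v h : isNk k p -> isNk k q ->
  PS (addN p q) v h = PS p v (fun eta => PS q (src eta) (fun nu => h (comp eta nu))).
Proof. intros Hp Hq. unfold PS at 2.
  transitivity (lsum (flat_map (fun eta => map (comp eta) (filter (fun l => dec (rng l = src eta)) (paths q)))
               (filter (fun l => dec (rng l = v)) (paths p))) h).
  2:{ rewrite lsum_flat_map. apply lsum_ext. intros eta _. rewrite lsum_map. reflexivity. }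
  unfold PS. apply lsum_perm. apply NoDup_Permutation.
  - apply NoDup_filter, paths_nodup, isNk_add; auto.
  - apply NoDup_flat_map'.
    + apply NoDup_filter, paths_nodup; auto.
    + intros eta _. apply FinFun.Injective_map_NoDup_in; [|apply NoDup_filter, paths_nodup; auto].
      intros x y Hx Hy E. apply filter_In in Hx, Hy. destruct Hx as [Hx Rx]; destruct Hy as [Hy Ry].
      apply dec_true in Rx, Ry. pdeg Hx Hq. pdeg Hy Hq.
      assert (Hpe : forall i, deg eta i = deg eta i) by auto.
      pose proof (pre_exact (deg eta) eta x (deg_isNk eta) (eq_sym Rx) Hpe) as [_ E1].
      pose proof (pre_exact (deg eta) eta y (deg_isNk eta) (eq_sym Ry) Hpe) as [_ E2]. congruence.
    + intros a b x Ha Hb Hxa Hxb. apply in_map_iff in Hxa, Hxb. destruct Hxa as [na [<- Hna]]. destruct Hxb as [nb [E Hnb]].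
      apply filter_In in Ha, Hb, Hna, Hnb. destruct Ha as [Ha _]; destruct Hb as [Hb _].
      destruct Hna as [_ Rna]; destruct Hnb as [_ Rnb]. apply dec_true in Rna, Rnb.
      pdeg Ha Hp. pdeg Hb Hp.
      pose proof (pre_exact p a na Hp (eq_sym Rna) Ha) as [E1 _].
      pose proof (pre_exact p b nb Hp (eq_sym Rnb) Hb) as [E2 _]. congruence.
  - intros lam. rewrite in_flat_map, filter_In, (paths_in _ _ (isNk_add _ _ Hp Hq)). split.
    + intros [Hd Hr]. apply dec_true in Hr.
      assert (Hle : forall i, (p i <= deg lam i)%nat) by (intro i; rewrite Hd; unfold addN; lia).
      destruct (pre_suf p lam Hp Hle) as (S & L & D1 & D2). exists (pre p lam). split.
      * apply filter_In. split; [apply (proj2 (paths_in p _ Hp)); auto|]. apply dec_t. rewrite <- Hr. transitivity (rng (comp (pre p lam) (suf p lam))); [rewrite comp_rng; auto| rewrite <- L; auto].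
      * apply in_map_iff. exists (suf p lam). split; auto. apply filter_In. split; [apply (proj2 (paths_in q _ Hq))|apply dec_t; auto].
        intro i. rewrite D2, Hd. unfold addN. lia.
    + intros [eta [He Hl]]. apply filter_In in He. destruct He as [He Re]. apply dec_true in Re. pdeg He Hp.
      apply in_map_iff in Hl. destruct Hl as [nu [<- Hn]]. apply filter_In in Hn. destruct Hn as [Hn Rn]. apply dec_true in Rn.
      pdeg Hn Hq. split.
      * intro i. rewrite deg_comp by auto. rewrite He, Hn. reflexivity.
      * apply dec_t. rewrite comp_rng; auto. Qed.

End KG.

Section INF.
Variable k : nat.
Variable G : kgraph_data.
Hypothesis HG : is_finite_kgraph k G.
Hypothesis Hedge : forall (w : Obj G) i, (i < k)%nat -> exists e : Mor G, rng e = w /\ forall j, deg e j = unitN i j.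

Definition ones (j : nat) : nat -> nat := fun i => if Nat.ltb i j then 1%nat else 0%nat.

Lemma ones_ex (w : Obj G) j : (j <= k)%nat -> exists e : Mor G, rng e = w /\ forall i, deg e i = ones j i.
Proof. induction j; intro Hj.
  - exists (idm w). split; [apply (idm_rng k G HG)|]. intro i. rewrite (deg_idm k G HG). reflexivity.
  - destruct IHj as [eta [R1 D1]]; [lia|]. destruct (Hedge (src eta) j) as [e [R2 D2]]; [lia|].
    exists (comp eta e). split; [rewrite (comp_rng k G HG); auto|].
    intro i. rewrite (deg_comp k G HG) by auto. rewrite D1, D2. unfold ones, unitN.
    destruct (Nat.ltb_spec i j), (Nat.eqb_spec i j), (Nat.ltb_spec i (S j)); lia. Qed.

Definition ext (w : Obj G) : Mor G := proj1_sig (constructive_indefinite_description _ (ones_ex w k (le_n k))).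
Lemma ext_rng w : rng (ext w) = w. Proof. unfold ext. exact (proj1 (proj2_sig (constructive_indefinite_description _ (ones_ex w k (le_n k))))). Qed.
Lemma ext_deg w i : deg (ext w) i = ones k i. Proof. unfold ext. exact (proj2 (proj2_sig (constructive_indefinite_description _ (ones_ex w k (le_n k)))) i). Qed.

Fixpoint Om (om : Mor G) (J : nat) : Mor G :=
  match J with O => om | S J' => comp (Om om J') (ext (src (Om om J'))) end.

Lemma Om_rng om J : rng (Om om J) = rng om.
Proof. induction J; simpl; auto. rewrite (comp_rng k G HG); auto. rewrite ext_rng; auto. Qed.
Lemma Om_deg om J i : deg (Om om J) i = (deg om i + J * ones k i)%nat.
Proof. induction J; simpl; [lia|]. rewrite (deg_comp k G HG) by (rewrite ext_rng; auto). rewrite IHJ, ext_deg. lia. Qed.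
Lemma Om_tail om J t : exists r, src (Om om J) = rng r /\ Om om (t + J) = comp (Om om J) r.
Proof. induction t.
  - exists (idm (src (Om om J))). split; [rewrite (idm_rng k G HG); auto|]. simpl. rewrite (comp_idr k G HG). auto.
  - destruct IHt as [r [S E]]. simpl. rewrite E.
    exists (comp r (ext (src (comp (Om om J) r)))).
    assert (Sr : src r = rng (ext (src (comp (Om om J) r)))). { rewrite ext_rng, (comp_src k G HG); auto. }
    split; [rewrite (comp_rng k G HG); auto|]. apply (comp_assoc k G HG); auto. Qed.

Definition seg (W : Mor G) (p q : nat -> nat) : Mor G := pre G (fun i => (q i - p i)%nat) (suf G p W).

Lemma seg_char W p q a b c : isNk k p -> isNk k q ->
  src a = rng b -> src b = rng c -> (forall i, deg a i = p i) -> (forall i, deg b i = (q i - p i)%nat) ->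
  W = comp a (comp b c) -> seg W p q = b.
Proof. intros Hp Hq S1 S2 D1 D2 ->. unfold seg.
  rewrite (proj2 (pre_exact k G HG p a (comp b c) Hp ltac:(rewrite (comp_rng k G HG); auto) D1)).
  apply (pre_exact k G HG); auto. apply (isNk_sub k); auto. Qed.

Lemma seg_decomp W p q : isNk k p -> isNk k q -> (forall i, (p i <= q i)%nat) -> (forall i, (q i <= deg W i)%nat) ->
  exists a c, src a = rng (seg W p q) /\ src (seg W p q) = rng c /\ (forall i, deg a i = p i) /\
     (forall i, deg (seg W p q) i = (q i - p i)%nat) /\ (forall i, deg c i = (deg W i - q i)%nat) /\
     W = comp a (comp (seg W p q) c).
Proof. intros Hp Hq Hpq HqW.
  destruct (pre_suf k G HG p W Hp) as (S1 & L1 & D1 & D2); [intro i; specialize (Hpq i); specialize (HqW i); lia|].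
  destruct (pre_suf k G HG (fun i => (q i - p i)%nat) (suf G p W) (isNk_sub k _ _ Hq Hp)) as (S3 & L3 & D3 & D4).
  { intro i. rewrite D2. specialize (Hpq i); specialize (HqW i); lia. }
  exists (pre G p W), (suf G (fun i => (q i - p i)%nat) (suf G p W)). unfold seg.
  split; [rewrite S1; rewrite L3 at 1; rewrite (comp_rng k G HG); auto|]. split; auto. split; auto. split; auto. split.
  - intro i. rewrite D4, D2. specialize (Hpq i); specialize (HqW i); lia.
  - rewrite <- L3. auto. Qed.

Fixpoint Jq (q : nat -> nat) (j : nat) : nat := match j with O => O | S j' => (q j' + Jq q j')%nat end.
Lemma Jq_ge q j i : (i < j)%nat -> (q i <= Jq q j)%nat.
Proof. induction j; simpl; intros; [lia|]. destruct (Nat.eq_dec i j); [subst; lia|]. specialize (IHj ltac:(lia)). lia. Qed.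
Lemma Jq_mono p q j : (forall i, (p i <= q i)%nat) -> (Jq p j <= Jq q j)%nat.
Proof. intro H; induction j; simpl; auto. specialize (H j). lia. Qed.

Lemma fits om J q : isNk k q -> (Jq q k <= J)%nat -> forall i, (q i <= deg (Om om J) i)%nat.
Proof. intros Hq HJ i. rewrite Om_deg. destruct (Nat.ltb i k) eqn:E.
  - apply Nat.ltb_lt in E. pose proof (Jq_ge q k i E). unfold ones. rewrite (proj2 (Nat.ltb_lt i k) E). lia.
  - apply Nat.ltb_ge in E. rewrite Hq; auto. lia. Qed.

Lemma seg_consist om J J' p q : isNk k p -> isNk k q -> (forall i, (p i <= q i)%nat) -> (Jq q k <= J)%nat -> (J <= J')%nat ->
  seg (Om om J') p q = seg (Om om J) p q.
Proof. intros Hp Hq Hpq HJ HJJ.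
  destruct (seg_decomp (Om om J) p q Hp Hq Hpq (fits om J q Hq HJ)) as (a & c & S1 & S2 & D1 & D2 & D3 & E).
  destruct (Om_tail om J (J' - J)) as [r [Sr Er]]. replace (J' - J + J)%nat with J' in Er by lia.
  apply (seg_char _ p q a (seg (Om om J) p q) (comp c r)); auto.
  - rewrite (comp_rng k G HG); auto. rewrite <- Sr, E, !(comp_src k G HG); auto. rewrite (comp_rng k G HG); auto.
  - rewrite Er. rewrite E at 1.
    assert (Sc : src c = rng r). { rewrite <- Sr, E, !(comp_src k G HG); auto. rewrite (comp_rng k G HG); auto. }
    rewrite (comp_assoc k G HG); [|rewrite (comp_rng k G HG); auto|rewrite (comp_src k G HG); auto].
    rewrite (comp_assoc k G HG); auto. Qed.

Definition xpath (om : Mor G) (p q : nat -> nat) : Mor G := seg (Om om (Jq q k)) p q.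

Lemma xpath_inf om : is_inf_path k G (xpath om).
Proof. split; [|split].
  - intros m Hm. unfold xpath. apply (deg0_idm k G HG). intro i.
    destruct (seg_decomp (Om om (Jq m k)) m m Hm Hm (fun i => le_n _) (fits om _ m Hm (le_n _))) as (_ & _ & _ & _ & _ & D & _ & _).
    rewrite D. lia.
  - intros m n Hm Hn Hmn i. unfold xpath.
    destruct (seg_decomp (Om om (Jq n k)) m n Hm Hn Hmn (fits om _ n Hn (le_n _))) as (_ & _ & _ & _ & _ & D & _ & _).
    apply D.
  - intros m n p Hm Hn Hp Hmn Hnp. unfold xpath.
    assert (Hmp : forall i, (m i <= p i)%nat) by (intro i; specialize (Hmn i); specialize (Hnp i); lia).
    pose proof (Jq_mono n p k Hnp) as Hj.
    rewrite <- (seg_consist om (Jq n k) (Jq p k) m n); auto.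
    set (W := Om om (Jq p k)).
    assert (HW : forall i, (p i <= deg W i)%nat) by (apply fits; auto).
    destruct (seg_decomp W n p Hn Hp Hnp HW) as (A & c & S1 & S2 & D1 & D2 & D3 & E).
    assert (HA : forall i, (m i <= deg A i)%nat) by (intro i; rewrite D1; auto).
    destruct (pre_suf k G HG m A Hm HA) as (S4 & L4 & D4 & D5).
    set (a := pre G m A) in *. set (b1 := suf G m A) in *. set (b2 := seg W n p) in *.
    assert (Sb1 : src b1 = rng b2). { rewrite <- S1. rewrite L4. rewrite (comp_src k G HG); auto. }
    assert (EW : W = comp a (comp b1 (comp b2 c))).
    { rewrite E, L4 at 1. apply (comp_assoc k G HG); auto. rewrite (comp_rng k G HG); auto. }
    assert (Hb1 : seg W m n = b1).
    { apply (seg_char W m n a b1 (comp b2 c)); auto. rewrite (comp_rng k G HG); auto.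
      intro i. rewrite D5, D1. auto. }
    rewrite Hb1. split; auto.
    apply (seg_char W m p a (comp b1 b2) c); auto.
    + rewrite (comp_rng k G HG); auto.
    + rewrite (comp_src k G HG); auto.
    + intro i. rewrite (deg_comp k G HG) by auto. rewrite D5, D1, D2. specialize (Hmn i); specialize (Hnp i); lia.
    + rewrite EW. f_equal. symmetry. apply (comp_assoc k G HG); auto. Qed.

Lemma xpath_start om : xpath om zeroN (deg om) = om /\ xpath om zeroN zeroN = idm (rng om).
Proof. split.
  - unfold xpath. destruct (Om_tail om 0 (Jq (deg om) k)) as [r [Sr Er]]. rewrite Nat.add_0_r in Er.
    apply (seg_char _ zeroN (deg om) (idm (rng om)) om r); auto.
    + apply (isNk_zero k). + apply (deg_isNk k G HG).
    + apply (idm_src k G HG).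
    + intro i. apply (deg_idm k G HG). + intro i. unfold zeroN. lia.
    + rewrite Er. simpl. rewrite <- (comp_rng k G HG om r) at 1 by auto. rewrite (comp_idl k G HG). auto.
  - unfold xpath. set (W := Om om (Jq zeroN k)).
    apply (seg_char W zeroN zeroN (idm (rng om)) (idm (rng om)) W); auto.
    + apply (isNk_zero k). + apply (isNk_zero k).
    + rewrite (idm_src k G HG), (idm_rng k G HG); auto.
    + rewrite (idm_src k G HG). unfold W. rewrite Om_rng. auto.
    + intro i. apply (deg_idm k G HG). + intro i. apply (deg_idm k G HG).
    + replace (rng om) with (rng W) by (unfold W; apply Om_rng). rewrite !(comp_idl k G HG). auto. Qed.

End INF.

Lemma fold_max_ge {A} (f : A -> R) b l x : In x l -> f x <= fold_right Rmax b (map f l).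
Proof. induction l; simpl; intros H; [destruct H|]. destruct H as [<-|H]; [apply Rmax_l|].
  eapply Rle_trans; [apply IHl; auto|apply Rmax_r]. Qed.
Lemma fold_max_b {A} (f : A -> R) b l : b <= fold_right Rmax b (map f l).
Proof. induction l; simpl; [lra|]. eapply Rle_trans; [apply IHl|apply Rmax_r]. Qed.
Lemma fold_max_att {A} (f : A -> R) b l : fold_right Rmax b (map f l) = b \/ exists x, In x l /\ fold_right Rmax b (map f l) = f x.
Proof. induction l; simpl; [auto|]. destruct (Rle_dec (f a) (fold_right Rmax b (map f l))) as [Hle|Hle].
  - rewrite (Rmax_right _ _ Hle). destruct IHl as [H|[x [Hx H]]]; [left; exact H|right; exists x; auto].
  - rewrite (Rmax_left _ _ (Rlt_le _ _ (Rnot_le_lt _ _ Hle))). right. exists a; auto. Qed.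
Lemma fold_min_le {A} (f : A -> R) b l x : In x l -> fold_right Rmin b (map f l) <= f x.
Proof. induction l; simpl; intros H; [destruct H|]. destruct H as [<-|H]; [apply Rmin_l|].
  eapply Rle_trans; [apply Rmin_r|apply IHl; auto]. Qed.
Lemma fold_min_att {A} (f : A -> R) b l : fold_right Rmin b (map f l) = b \/ exists x, In x l /\ fold_right Rmin b (map f l) = f x.
Proof. induction l; simpl; [auto|]. destruct (Rle_dec (f a) (fold_right Rmin b (map f l))) as [Hle|Hle].
  - rewrite (Rmin_left _ _ Hle). right. exists a; auto.
  - rewrite (Rmin_right _ _ (Rlt_le _ _ (Rnot_le_lt _ _ Hle))). destruct IHl as [H|[x [Hx H]]]; [left; exact H|right; exists x; auto]. Qed.

Lemma cv_const c : Un_cv (fun _ => c) c.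
Proof. intros e He. exists O. intros. unfold Rdist. rewrite Rminus_diag, Rabs_R0. lra. Qed.
Lemma cv_shift u l : Un_cv u l -> Un_cv (fun N => u (S N)) l.
Proof. intros H e He. destruct (H e He) as [N HN]. exists N. intros n Hn. apply HN. lia. Qed.
Lemma cv_lsum {A} (l : list A) (u : nat -> A -> R) (lim : A -> R) :
  (forall j, In j l -> Un_cv (fun N => u N j) (lim j)) -> Un_cv (fun N => lsum l (u N)) (lsum l lim).
Proof. induction l; intros H.
  - unfold lsum; simpl. apply cv_const.
  - rewrite lsum_cons. apply (CV_plus (fun N => u N a) (fun N => lsum l (u N))); [apply H; simpl; auto|].
    apply IHl. intros; apply H; simpl; auto. Qed.

Lemma lsum_const_gen {A} (l : list A) c : lsum l (fun _ => c) = INR (length l) * c.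
Proof. induction l; simpl; [unfold lsum; simpl; lra|]. rewrite lsum_cons, IHl. destruct (length l); simpl; lra. Qed.

Fixpoint gsum (th : R) (n : nat) : R := match n with O => 0 | S n' => gsum th n' + th ^ n' end.
Lemma gsum_id th n : (1 - th) * gsum th n = 1 - th ^ n.
Proof. induction n; simpl; [ring|]. rewrite Rmult_plus_distr_l, IHn. ring. Qed.
Lemma gsum_nonneg th n : 0 <= th -> 0 <= gsum th n.
Proof. intro H; induction n; simpl; [lra|]. pose proof (pow_le th n H). lra. Qed.

Section FIN.
Variable T : Type.
Variable vs : list T.
Hypothesis vs_nd : NoDup vs.
Hypothesis vs_all : forall v, In v vs.
Variable v0 : T.

Definition mv (M : T -> T -> R) (x : T -> R) : T -> R := fun i => lsum vs (fun j => M i j * x j).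
Definition fmax (f : T -> R) : R := fold_right Rmax (f v0) (map f vs).
Definition fmin (f : T -> R) : R := fold_right Rmin (f v0) (map f vs).
Lemma fmax_ge f i : f i <= fmax f. Proof. apply fold_max_ge, vs_all. Qed.
Lemma fmax_att f : exists i, f i = fmax f.
Proof. unfold fmax. destruct (fold_max_att f (f v0) vs) as [H|[x [_ H]]]; eauto. Qed.
Lemma fmin_le f i : fmin f <= f i. Proof. apply fold_min_le, vs_all. Qed.
Lemma fmin_att f : exists i, f i = fmin f.
Proof. unfold fmin. destruct (fold_min_att f (f v0) vs) as [H|[x [_ H]]]; eauto. Qed.

Lemma mv_lin M x y a b i : mv M (fun j => a * x j + b * y j) i = a * mv M x i + b * mv M y i.
Proof. unfold mv. rewrite <- !lsum_scal, <- lsum_plus. apply lsum_ext. intros; ring. Qed.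

Definition nn : R := INR (length vs).
Lemma lsum_const c : lsum vs (fun _ => c) = nn * c.
Proof. unfold nn. apply lsum_const_gen. Qed.
Lemma nn_ge1 : 1 <= nn.
Proof. unfold nn. pose proof (vs_all v0). destruct vs; [destruct H|]. simpl length. rewrite S_INR. pose proof (pos_INR (length l)). lra. Qed.

Section PF.
Variable P : T -> T -> R.
Hypothesis Ppos : forall i j, 0 < P i j.

Definition pmin := fmin (fun i => fmin (P i)).
Definition pmax := fmax (fun i => fmax (P i)).
Lemma pmin_le i j : pmin <= P i j.
Proof. unfold pmin. eapply Rle_trans; [apply (fmin_le _ i)|apply fmin_le]. Qed.
Lemma pmax_ge i j : P i j <= pmax.
Proof. unfold pmax. eapply Rle_trans; [apply (fmax_ge (P i) j)|apply (fmax_ge (fun i => fmax (P i)))]. Qed.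
Lemma pmin_pos : 0 < pmin.
Proof. unfold pmin. destruct (fmin_att (fun i => fmin (P i))) as [i Hi]. rewrite <- Hi.
  destruct (fmin_att (P i)) as [j Hj]. rewrite <- Hj. auto. Qed.

Lemma mv_pos y i : (forall j, 0 < y j) -> 0 < mv P y i.
Proof. intro H. unfold mv. apply (lsum_pos _ _ v0); auto. intros; apply Rlt_le, Rmult_lt_0_compat; auto.
  apply Rmult_lt_0_compat; auto. Qed.
Lemma mv_upper y i : (forall j, 0 <= y j) -> mv P y i <= pmax * lsum vs y.
Proof. intro H. unfold mv. rewrite <- lsum_scal. apply lsum_le. intros j _. apply Rmult_le_compat_r; auto. apply pmax_ge. Qed.
Lemma mv_lower y i : (forall j, 0 <= y j) -> pmin * lsum vs y <= mv P y i.
Proof. intro H. unfold mv. rewrite <- lsum_scal. apply lsum_le. intros j _. apply Rmult_le_compat_r; auto. apply pmin_le. Qed.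

Fixpoint X (N : nat) : T -> R := match N with O => mv P (fun _ => 1) | S N' => mv P (X N') end.
Definition Yof (N : nat) : T -> R := match N with O => fun _ => 1 | S N' => X N' end.
Lemma X_eq N : X N = mv P (Yof N). Proof. destruct N; reflexivity. Qed.
Lemma X_pos N i : 0 < X N i.
Proof. revert i; induction N; intro i; simpl; apply mv_pos; auto. intros; lra. Qed.
Lemma Yof_pos N j : 0 < Yof N j. Proof. destruct N; simpl; [lra|apply X_pos]. Qed.

Definition kap : R := pmin * pmin / (nn * pmax * pmax).
Lemma pmin_le_pmax : pmin <= pmax. Proof. eapply Rle_trans; [apply (pmin_le v0 v0)|apply pmax_ge]. Qed.
Lemma kap_pos : 0 < kap.
Proof. unfold kap. pose proof pmin_pos. pose proof pmin_le_pmax. pose proof nn_ge1.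
  apply Rdiv_lt_0_compat; [nra|]. apply Rmult_lt_0_compat; [|lra]. apply Rmult_lt_0_compat; lra. Qed.
Lemma kap_le1 : kap <= 1.
Proof. unfold kap. pose proof pmin_pos. pose proof pmin_le_pmax. pose proof nn_ge1.
  assert (0 < nn * pmax * pmax) by (apply Rmult_lt_0_compat; [apply Rmult_lt_0_compat|]; lra).
  apply (Rmult_le_reg_r (nn * pmax * pmax)); auto. unfold Rdiv. rewrite Rmult_assoc, Rinv_l by lra. 
  assert (pmin * pmin <= pmax * pmax) by nra. nra. Qed.

Lemma weight_lb N i j : kap * X (S N) i <= P i j * X N j.
Proof. simpl X. rewrite (X_eq N). set (Y := Yof N). assert (HY : forall j, 0 < Y j) by (apply Yof_pos).
  assert (HY' : forall j, 0 <= Y j) by (intro; apply Rlt_le; auto).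
  assert (S0 : 0 < lsum vs Y) by (apply (lsum_pos _ _ v0); auto).
  assert (E1 : mv P (mv P Y) i <= pmax * (nn * (pmax * lsum vs Y))).
  { eapply Rle_trans; [apply mv_upper; intro; apply Rlt_le, mv_pos; auto|].
    apply Rmult_le_compat_l; [pose proof pmin_pos; pose proof pmin_le_pmax; lra|].
    rewrite <- lsum_const. apply lsum_le. intros; apply mv_upper; auto. }
  assert (E2 : pmin * lsum vs Y <= mv P Y j) by (apply mv_lower; auto).
  pose proof (pmin_le i j). pose proof pmin_pos. pose proof kap_pos. pose proof nn_ge1. pose proof pmin_le_pmax.
  assert (E3 : P i j * mv P Y j >= pmin * (pmin * lsum vs Y)).
  { apply Rle_ge. apply Rmult_le_compat; try lra; nra. }
  assert (E4 : kap * (pmax * (nn * (pmax * lsum vs Y))) = pmin * (pmin * lsum vs Y)).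
  { unfold kap. field. split; lra. }
  assert (kap * mv P (mv P Y) i <= kap * (pmax * (nn * (pmax * lsum vs Y)))) by (apply Rmult_le_compat_l; lra).
  lra. Qed.

Definition q (N : nat) (i : T) : R := X (S N) i / X N i.
Definition MM (N : nat) : R := fmax (q N).
Definition mm (N : nat) : R := fmin (q N).
Lemma q_pos N i : 0 < q N i. Proof. unfold q. apply Rdiv_lt_0_compat; apply X_pos. Qed.
Lemma XS_q N j : X (S N) j = q N j * X N j. Proof. unfold q. field. apply Rgt_not_eq, X_pos. Qed.

Lemma convex_bounds (w qq : T -> R) (lo hi kk W : R) :
  (forall j, 0 <= w j) -> W = lsum vs w -> 0 < W -> lo = fmin qq -> hi = fmax qq ->
  (forall j, kk * W <= w j) ->
  W * (kk * hi + (1 - kk) * lo) <= lsum vs (fun j => w j * qq j) <= W * (kk * lo + (1 - kk) * hi).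
Proof. intros Hw HW HW0 Hlo Hhi Hk.
  assert (Hq : forall j, lo <= qq j <= hi) by (intro j; rewrite Hlo, Hhi; split; [apply fmin_le|apply fmax_ge]).
  destruct (fmin_att qq) as [j0 Hj0]. destruct (fmax_att qq) as [j1 Hj1].
  split.
  - assert (lsum vs (fun j => w j * qq j) = W * lo + lsum vs (fun j => w j * (qq j - lo))).
    { rewrite HW, <- lsum_scalr, <- lsum_plus. apply lsum_ext; intros; ring. }
    assert (w j1 * (qq j1 - lo) <= lsum vs (fun j => w j * (qq j - lo))).
    { apply (lsum_ge_term _ (fun j => w j * (qq j - lo))); auto. intros. apply Rmult_le_pos; auto. specialize (Hq x); lra. }
    specialize (Hk j1). specialize (Hq j1). assert (kk * W * (qq j1 - lo) <= w j1 * (qq j1 - lo)) by (apply Rmult_le_compat_r; lra).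
    assert (qq j1 >= hi) by lra. nra.
  - assert (lsum vs (fun j => w j * qq j) + lsum vs (fun j => w j * (hi - qq j)) = W * hi).
    { rewrite <- lsum_plus, HW, <- lsum_scalr. apply lsum_ext; intros; ring. }
    assert (w j0 * (hi - qq j0) <= lsum vs (fun j => w j * (hi - qq j))).
    { apply (lsum_ge_term _ (fun j => w j * (hi - qq j))); auto. intros. apply Rmult_le_pos; auto. specialize (Hq x); lra. }
    specialize (Hk j0). specialize (Hq j0). assert (kk * W * (hi - qq j0) <= w j0 * (hi - qq j0)) by (apply Rmult_le_compat_r; lra).
    assert (qq j0 <= lo) by lra. nra. Qed.

Lemma qS_bounds N i : kap * MM N + (1 - kap) * mm N <= q (S N) i <= kap * mm N + (1 - kap) * MM N.
Proof.
  assert (Hw : forall j, 0 <= P i j * X N j) by (intro; apply Rlt_le, Rmult_lt_0_compat; auto; apply X_pos).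
  assert (HW : X (S N) i = lsum vs (fun j => P i j * X N j)) by reflexivity.
  pose proof (convex_bounds (fun j => P i j * X N j) (q N) (mm N) (MM N) kap (X (S N) i) Hw HW (X_pos _ _) eq_refl eq_refl (weight_lb N i)) as [B1 B2].
  assert (E : X (S (S N)) i = lsum vs (fun j => P i j * X N j * q N j)).
  { change (X (S (S N)) i) with (mv P (X (S N)) i). unfold mv. apply lsum_ext. intros j _. rewrite XS_q. ring. }
  pose proof (X_pos (S N) i).
  assert (HQ : q (S N) i * X (S N) i = lsum vs (fun j => P i j * X N j * q N j)).
  { rewrite <- E. unfold q. field. lra. }
  split; apply (Rmult_le_reg_r (X (S N) i)); auto; nra. Qed.

Lemma mm_le_MM N : mm N <= MM N. Proof. eapply Rle_trans; [apply (fmin_le _ v0)|apply fmax_ge]. Qed.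
Lemma MM_dec N : MM (S N) <= MM N.
Proof. destruct (fmax_att (q (S N))) as [i Hi]. unfold MM at 1. rewrite <- Hi. pose proof (qS_bounds N i).
  pose proof (mm_le_MM N). pose proof kap_pos. pose proof kap_le1. nra. Qed.
Lemma mm_inc N : mm N <= mm (S N).
Proof. destruct (fmin_att (q (S N))) as [i Hi]. unfold mm at 2. rewrite <- Hi. pose proof (qS_bounds N i).
  pose proof (mm_le_MM N). pose proof kap_pos. pose proof kap_le1. nra. Qed.
Lemma D_contr N : MM (S N) - mm (S N) <= (1 - kap) * (MM N - mm N).
Proof. destruct (fmax_att (q (S N))) as [i Hi]. destruct (fmin_att (q (S N))) as [j Hj].
  replace (MM (S N)) with (q (S N) i) by (unfold MM; auto). replace (mm (S N)) with (q (S N) j) by (unfold mm; auto).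
  pose proof (qS_bounds N i). pose proof (qS_bounds N j).
  pose proof (mm_le_MM N). pose proof kap_pos. pose proof kap_le1.
  assert (0 <= kap * (MM N - mm N)) by (apply Rmult_le_pos; lra). nra. Qed.
Lemma mm_ge0 N : mm 0 <= mm N. Proof. induction N; [lra|]. pose proof (mm_inc N). lra. Qed.
Lemma mm0_pos : 0 < mm 0. Proof. destruct (fmin_att (q 0)) as [i Hi]. unfold mm. rewrite <- Hi. apply q_pos. Qed.
Lemma D_geom N : MM N - mm N <= (MM 0 - mm 0) * (1 - kap) ^ N.
Proof. induction N; simpl; [lra|]. pose proof (D_contr N). pose proof kap_pos. pose proof kap_le1. nra. Qed.

Fixpoint sumD (N : nat) : R := match N with O => 0 | S N' => sumD N' + (MM N' - mm N') end.
Lemma sumD_bound N : sumD N <= (MM 0 - mm 0) / kap.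
Proof. pose proof kap_pos. pose proof kap_le1. pose proof (mm_le_MM 0).
  assert (sumD N <= (MM 0 - mm 0) * gsum (1 - kap) N).
  { induction N; simpl; [lra|]. pose proof (D_geom N). nra. }
  pose proof (gsum_id (1 - kap) N). pose proof (pow_le (1 - kap) N ltac:(lra)).
  assert (0 <= gsum (1 - kap) N) by (apply gsum_nonneg; lra).
  assert (gsum (1 - kap) N * kap <= 1) by nra.
  apply (Rmult_le_reg_r kap); auto. unfold Rdiv. rewrite Rmult_assoc, Rinv_l, Rmult_1_r by lra. nra. Qed.

Fixpoint prodM (N : nat) : R := match N with O => 1 | S N' => prodM N' * MM N' end.
Fixpoint prodm (N : nat) : R := match N with O => 1 | S N' => prodm N' * mm N' end.
Lemma prodm_pos N : 0 < prodm N.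
Proof. induction N; simpl; [lra|]. apply Rmult_lt_0_compat; auto. pose proof (mm_ge0 N). pose proof mm0_pos. lra. Qed.
Lemma prodM_pos N : 0 < prodM N.
Proof. induction N; simpl; [lra|]. apply Rmult_lt_0_compat; auto. pose proof (mm_ge0 N). pose proof mm0_pos. pose proof (mm_le_MM N). lra. Qed.
Lemma one_plus_exp t : 0 <= t -> 1 + t <= exp t.
Proof. intro H. destruct (Req_dec t 0) as [->|Hn]; [rewrite exp_0; lra|]. left; apply exp_ineq1; auto. Qed.
Lemma prod_ratio N : prodM N <= prodm N * exp (sumD N / mm 0).
Proof. induction N; simpl. - unfold Rdiv; rewrite Rmult_0_l, exp_0; lra.
  - pose proof (mm_ge0 N). pose proof mm0_pos. pose proof (mm_le_MM N). pose proof (prodM_pos N). pose proof (prodm_pos N).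
    assert (MM N <= mm N * exp ((MM N - mm N) / mm 0)).
    { pose proof (one_plus_exp ((MM N - mm N) / mm 0)). 
      assert (0 <= (MM N - mm N) / mm 0) by (unfold Rdiv; apply Rmult_le_pos; [lra|apply Rlt_le, Rinv_0_lt_compat; lra]). specialize (H4 H5).
      assert ((MM N - mm N) <= mm N * ((MM N - mm N) / mm 0)).
      { unfold Rdiv. apply (Rmult_le_reg_r (mm 0)); auto. rewrite !Rmult_assoc, Rinv_l by lra. nra. }
      nra. }
    replace ((sumD N + (MM N - mm N)) / mm 0) with (sumD N / mm 0 + (MM N - mm N) / mm 0) by (field; lra).
    rewrite exp_plus. pose proof (exp_pos (sumD N / mm 0)). pose proof (exp_pos ((MM N - mm N) / mm 0)).
    assert (prodM N * MM N <= prodm N * exp (sumD N / mm 0) * MM N) by (apply Rmult_le_compat_r; lra).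
    assert (prodm N * exp (sumD N / mm 0) * MM N <= prodm N * exp (sumD N / mm 0) * (mm N * exp ((MM N - mm N) / mm 0))).
    { apply Rmult_le_compat_l; auto. apply Rlt_le, Rmult_lt_0_compat; auto. }
    nra. Qed.

Definition Cst : R := exp ((MM 0 - mm 0) / kap / mm 0).
Lemma exp_le a b : a <= b -> exp a <= exp b.
Proof. intro H. destruct (Req_dec a b) as [->|Hn]; [lra|]. left; apply exp_increasing; lra. Qed.
Lemma prod_ratio' N : prodM N <= prodm N * Cst.
Proof. eapply Rle_trans; [apply prod_ratio|]. apply Rmult_le_compat_l; [apply Rlt_le, prodm_pos|].
  unfold Cst. apply exp_le. unfold Rdiv. apply Rmult_le_compat_r; [apply Rlt_le, Rinv_0_lt_compat, mm0_pos|].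
  apply sumD_bound. Qed.
Lemma Cst_pos : 0 < Cst. Proof. apply exp_pos. Qed.

Definition aa (N : nat) (i : T) : R := X N i / prodM N.
Lemma b_inc N i : X 0 i <= X N i / prodm N.
Proof. induction N; [simpl prodm; unfold Rdiv; rewrite Rinv_1; lra|].
  change (prodm (S N)) with (prodm N * mm N). rewrite XS_q. pose proof (fmin_le (q N) i). fold (mm N) in H. pose proof (X_pos N i). pose proof (prodm_pos N).
  pose proof (mm_ge0 N). pose proof mm0_pos.
  assert (X N i / prodm N <= q N i * X N i / (prodm N * mm N)).
  { assert (q N i * X N i / (prodm N * mm N) = (q N i / mm N) * (X N i / prodm N)) by (field; lra).
    rewrite H4. assert (1 <= q N i / mm N). { apply (Rmult_le_reg_r (mm N)); [lra|]. unfold Rdiv. rewrite Rmult_assoc, Rinv_l by lra. lra. }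
    assert (0 < X N i / prodm N) by (apply Rdiv_lt_0_compat; auto). nra. }
  lra. Qed.
Lemma aa_lb N i : X 0 i / Cst <= aa N i.
Proof. unfold aa. pose proof (b_inc N i). pose proof (prod_ratio' N). pose proof (prodm_pos N). pose proof (prodM_pos N).
  pose proof Cst_pos. pose proof (X_pos N i).
  assert (X N i / (prodm N * Cst) <= X N i / prodM N).
  { unfold Rdiv. apply Rmult_le_compat_l; [lra|]. apply Rinv_le_contravar; auto. }
  assert (X N i / (prodm N * Cst) = (X N i / prodm N) / Cst) by (field; lra).
  assert (X 0 i / Cst <= (X N i / prodm N) / Cst) by (unfold Rdiv; apply Rmult_le_compat_r; [apply Rlt_le, Rinv_0_lt_compat|]; lra).
  lra. Qed.
Lemma aa_dec N i : aa (S N) i <= aa N i.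
Proof. unfold aa. change (prodM (S N)) with (prodM N * MM N). rewrite XS_q. pose proof (fmax_ge (q N) i). fold (MM N) in H.
  pose proof (X_pos N i). pose proof (prodM_pos N). pose proof (q_pos N i).
  assert (0 < MM N) by lra.
  assert (q N i * X N i / (prodM N * MM N) = (q N i / MM N) * (X N i / prodM N)) by (field; lra).
  rewrite H4. assert (q N i / MM N <= 1). { apply (Rmult_le_reg_r (MM N)); auto. unfold Rdiv. rewrite Rmult_assoc, Rinv_l by lra. lra. }
  assert (0 < X N i / prodM N) by (apply Rdiv_lt_0_compat; auto). nra. Qed.
Lemma aa_eig N i : mv P (aa N) i = MM N * aa (S N) i.
Proof. unfold aa, mv. change (prodM (S N)) with (prodM N * MM N). assert (0 < MM N) by (pose proof (mm_le_MM N); pose proof (mm_ge0 N); pose proof mm0_pos; lra).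
  pose proof (prodM_pos N).
  transitivity (lsum vs (fun j => P i j * X N j) / prodM N).
  { unfold Rdiv. rewrite <- lsum_scalr. apply lsum_ext; intros; ring. }
  change (lsum vs (fun j => P i j * X N j)) with (X (S N) i). field. lra. Qed.
Lemma MM_lb N : mm 0 <= MM N. Proof. pose proof (mm_le_MM N). pose proof (mm_ge0 N). lra. Qed.

Lemma lb_has (u : nat -> R) c : (forall N, c <= u N) -> has_lb u.
Proof. intro H. exists (- c). intros x [n ->]. unfold opp_seq. specialize (H n). lra. Qed.

Theorem PF_pos : exists xi r, (forall i, 0 < xi i) /\ 0 < r /\ forall i, mv P xi i = r * xi i.
Proof.
  set (xi := fun i => proj1_sig (decreasing_cv (fun N => aa N i) (fun N => aa_dec N i) (lb_has _ _ (fun N => aa_lb N i)))).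
  assert (Hxi : forall i, Un_cv (fun N => aa N i) (xi i)) by (intro i; unfold xi; apply proj2_sig).
  destruct (decreasing_cv MM MM_dec (lb_has _ _ MM_lb)) as [r Hr].
  exists xi, r. split; [|split].
  - intro i. assert (X 0 i / Cst <= xi i).
    { apply (Rle_cv_lim (Un := fun _ => X 0 i / Cst) (Vn := fun N => aa N i)); [intro; apply aa_lb|apply cv_const|apply Hxi]. }
    assert (0 < X 0 i / Cst) by (apply Rdiv_lt_0_compat; [apply X_pos|apply Cst_pos]). lra.
  - assert (mm 0 <= r) by (apply (Rle_cv_lim (Un := fun _ => mm 0) (Vn := MM)); [intro; apply MM_lb|apply cv_const|apply Hr]). pose proof mm0_pos. lra.
  - intro i. apply (UL_sequence (fun N => mv P (aa N) i)).
    + unfold mv. apply cv_lsum. intros j _. apply (CV_mult (fun _ => P i j) (fun N => aa N j)); [apply cv_const|apply Hxi].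
    + assert (E : (fun N => mv P (aa N) i) = (fun N => MM N * aa (S N) i)) by (apply functional_extensionality; intro; apply aa_eig).
      rewrite E. apply CV_mult; auto. apply (cv_shift (fun N => aa N i)). auto. Qed.
End PF.

Lemma PF_unique (P : T -> T -> R) xi eta r : (forall i j, 0 < P i j) -> (forall i, 0 < xi i) ->
  (forall i, mv P xi i = r * xi i) -> (forall i, mv P eta i = r * eta i) -> exists c, forall i, eta i = c * xi i.
Proof. intros Pp Hx Ex Ee. set (c := fmin (fun i => eta i / xi i)). exists c.
  destruct (fmin_att (fun i => eta i / xi i)) as [i0 Hi0]. fold c in Hi0. cbv beta in Hi0.
  set (z := fun i => 1 * eta i + (- c) * xi i).
  assert (Hz : forall i, 0 <= z i).
  { intro i. unfold z. pose proof (fmin_le (fun i => eta i / xi i) i). fold c in H. simpl in H. pose proof (Hx i).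
    assert (c * xi i <= eta i). { apply (Rmult_le_reg_r (/ xi i)); [apply Rinv_0_lt_compat; auto|]. rewrite Rmult_assoc, Rinv_r by lra. lra. }
    lra. }
  assert (Hz0 : z i0 = 0). { unfold z. rewrite <- Hi0. field. apply Rgt_not_eq, Hx. }
  assert (Ez : mv P z i0 = 0). { unfold z. rewrite mv_lin, Ex, Ee. unfold z in Hz0. transitivity (r * (1 * eta i0 + - c * xi i0)); [ring|]. rewrite Hz0; ring. }
  intro i. assert (P i0 i * z i = 0).
  { apply (lsum_eq_zero_nonneg vs (fun j => P i0 j * z j)); auto. intros; apply Rmult_le_pos; [apply Rlt_le; auto|auto]. }
  assert (z i = 0). { pose proof (Pp i0 i). destruct (Rmult_integral _ _ H); auto. lra. }
  unfold z in H0. lra. Qed.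

Definition eigv (B : T -> T -> R) (a b : R) : Prop :=
  exists x z : T -> R, (exists v, x v <> 0 \/ z v <> 0) /\
    forall v, lsum vs (fun u => B v u * x u) = a * x v - b * z v /\ lsum vs (fun u => B v u * z u) = a * z v + b * x v.

End FIN.

Lemma le_sqrt_of_sq x y : 0 <= y -> (x <= 0 \/ x * x <= y) -> x <= sqrt y.
Proof. intros Hy [H|H]; [pose proof (sqrt_pos y); lra|].
  destruct (Rle_dec x 0); [pose proof (sqrt_pos y); lra|]. rewrite <- (sqrt_square x) by lra. apply sqrt_le_1_alt; auto. Qed.

Lemma minkowski a b c d : sqrt ((a + c) ^ 2 + (b + d) ^ 2) <= sqrt (a ^ 2 + b ^ 2) + sqrt (c ^ 2 + d ^ 2).
Proof. assert (H1 : 0 <= a ^ 2 + b ^ 2) by nra. assert (H2 : 0 <= c ^ 2 + d ^ 2) by nra.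
  assert (ac : a * c + b * d <= sqrt (a ^ 2 + b ^ 2) * sqrt (c ^ 2 + d ^ 2)).
  { rewrite <- sqrt_mult by auto. apply le_sqrt_of_sq; [apply Rmult_le_pos; auto|]. right. assert (0 <= (a*d - b*c)^2) by (apply pow2_ge_0). replace ((a ^ 2 + b ^ 2) * (c ^ 2 + d ^ 2)) with ((a*c+b*d)*(a*c+b*d) + (a*d - b*c)^2) by ring. lra. }
  rewrite <- (sqrt_square (sqrt (a ^ 2 + b ^ 2) + sqrt (c ^ 2 + d ^ 2))) by (pose proof (sqrt_pos (a^2+b^2)); pose proof (sqrt_pos (c^2+d^2)); lra).
  apply sqrt_le_1_alt. pose proof (sqrt_sqrt _ H1). pose proof (sqrt_sqrt _ H2). nra. Qed.

Lemma tri_lsum {A} (l : list A) (w p q : A -> R) : (forall j, 0 <= w j) ->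
  sqrt ((lsum l (fun j => w j * p j)) ^ 2 + (lsum l (fun j => w j * q j)) ^ 2) <= lsum l (fun j => w j * sqrt (p j ^ 2 + q j ^ 2)).
Proof. intro Hw. induction l.
  - unfold lsum; simpl. replace (0 * (0 * 1) + 0 * (0 * 1)) with 0 by ring. rewrite sqrt_0. lra.
  - rewrite !lsum_cons. eapply Rle_trans; [apply minkowski|]. apply Rplus_le_compat; auto.
    replace ((w a * p a) ^ 2 + (w a * q a) ^ 2) with ((w a) ^ 2 * (p a ^ 2 + q a ^ 2)) by ring.
    rewrite sqrt_mult by (try nra). rewrite sqrt_pow2 by auto. lra. Qed.

Lemma spectral_char {T} (vs : list T) (B : T -> T -> R) xi c (v0 : T) : (forall v, In v vs) ->
  (forall u v, 0 <= B u v) -> (forall v, 0 < xi v) -> 0 <= c -> (forall v, mv T vs B xi v = c * xi v) ->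
  is_lub (fun t => exists a b, eigv T vs B a b /\ t = sqrt (a ^ 2 + b ^ 2)) c.
Proof. intros Hall HB Hx Hc Heig. split.
  - intros t [a [b [[x [z [[v Hv] He]]] ->]]].
    set (f := fun v => sqrt (x v ^ 2 + z v ^ 2) / xi v).
    destruct (fmax_att T vs v0 f) as [v1 Hv1]. set (tt := fmax T vs v0 f) in *.
    assert (Hb : forall u, sqrt (x u ^ 2 + z u ^ 2) <= tt * xi u).
    { intro u. pose proof (fmax_ge T vs Hall v0 f u). fold tt in H. unfold f in H. pose proof (Hx u).
      apply (Rmult_le_compat_r (xi u)) in H; [|lra]. unfold Rdiv in H. rewrite Rmult_assoc, Rinv_l, Rmult_1_r in H by lra. lra. }
    assert (Htp : 0 < tt).
    { assert (0 < f v). { unfold f. apply Rdiv_lt_0_compat; [apply sqrt_lt_R0|apply Hx].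
        destruct Hv as [Hv|Hv]; [assert (0 < x v ^ 2) by (simpl; rewrite Rmult_1_r; apply Rsqr_pos_lt; auto)|assert (0 < z v ^ 2) by (simpl; rewrite Rmult_1_r; apply Rsqr_pos_lt; auto)]; nra. }
      pose proof (fmax_ge T vs Hall v0 f v). fold tt in H0. lra. }
    assert (Hu1 : sqrt (x v1 ^ 2 + z v1 ^ 2) = tt * xi v1).
    { rewrite <- Hv1. unfold f. field. apply Rgt_not_eq, Hx. }
    destruct (He v1) as [E1 E2].
    assert (Hn : sqrt ((a * x v1 - b * z v1) ^ 2 + (a * z v1 + b * x v1) ^ 2) = sqrt (a ^ 2 + b ^ 2) * sqrt (x v1 ^ 2 + z v1 ^ 2)).
    { rewrite <- sqrt_mult by nra. f_equal. ring. }
    rewrite <- E1, <- E2 in Hn.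
    pose proof (tri_lsum vs (B v1) x z (HB v1)) as Ht.
    assert (lsum vs (fun j => B v1 j * sqrt (x j ^ 2 + z j ^ 2)) <= lsum vs (fun j => B v1 j * (tt * xi j))).
    { apply lsum_le. intros j _. apply Rmult_le_compat_l; auto. }
    assert (lsum vs (fun j => B v1 j * (tt * xi j)) = tt * (c * xi v1)).
    { rewrite <- Heig. unfold mv. rewrite <- lsum_scal. apply lsum_ext; intros; ring. }
    rewrite Hn, Hu1 in Ht. pose proof (Hx v1). pose proof (sqrt_pos (a ^ 2 + b ^ 2)).
    assert (sqrt (a ^ 2 + b ^ 2) * (tt * xi v1) <= c * (tt * xi v1)) by lra.
    apply (Rmult_le_reg_r (tt * xi v1)); [apply Rmult_lt_0_compat; auto|]. lra.
  - intros ub Hub. apply Hub. exists c, 0. split.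
    + exists xi, (fun _ => 0). split; [exists v0; left; apply Rgt_not_eq, Hx|].
      intro v. split; [rewrite <- (Heig v); unfold mv; ring|].
      rewrite (lsum_ext _ _ (fun _ => 0)), lsum_zero; [ring|]. intros; ring.
    + replace (c ^ 2 + 0 ^ 2) with (c ^ 2) by ring. rewrite sqrt_pow2; auto. Qed.

Fixpoint rp (rho : nat -> R) (k : nat) (q : nat -> nat) : R :=
  match k with O => 1 | S k' => rp rho k' q * rho k' ^ q k' end.
Lemma fold_mult_init (l : list R) c : fold_right Rmult c l = fold_right Rmult 1 l * c.
Proof. induction l; simpl; [ring|]. rewrite IHl. ring. Qed.
Lemma rho_pow_rp k rho q : rho_pow k rho q = rp rho k q.
Proof. unfold rho_pow. induction k; [reflexivity|]. rewrite seq_S, map_app, fold_right_app. simpl.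
  rewrite fold_mult_init, IHk. ring. Qed.
Lemma rp_add rho k a b : rp rho k (addN a b) = rp rho k a * rp rho k b.
Proof. induction k; simpl; [ring|]. rewrite IHk. unfold addN. rewrite pow_add. ring. Qed.
Lemma rp_unit_below rho i j : (j <= i)%nat -> rp rho j (unitN i) = 1.
Proof. induction j; intro H; simpl; [auto|]. unfold unitN at 2. destruct (Nat.eqb_spec j i); [lia|]. rewrite IHj by lia. ring. Qed.
Lemma rp_unit rho k i : (i < k)%nat -> rp rho k (unitN i) = rho i.
Proof. induction k; intro H; [lia|]. simpl. unfold unitN at 2. destruct (Nat.eqb_spec k i).
  - rewrite e. rewrite rp_unit_below by lia. ring.
  - rewrite IHk by lia. ring. Qed.
Lemma rp_zero rho k q : (forall i, (i < k)%nat -> q i = 0%nat) -> rp rho k q = 1.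
Proof. induction k; intro H; simpl; [auto|]. rewrite IHk by (intros; apply H; lia). rewrite (H k) by lia. ring. Qed.
Lemma rp_pos rho k q : (forall i, (i < k)%nat -> 0 < rho i) -> 0 < rp rho k q.
Proof. induction k; intro H; simpl; [lra|]. apply Rmult_lt_0_compat; [apply IHk; intros; apply H; lia|apply pow_lt; apply H; lia]. Qed.
Lemma rp_ext rho1 rho2 k q1 q2 : (forall i, (i < k)%nat -> rho1 i = rho2 i /\ q1 i = q2 i) -> rp rho1 k q1 = rp rho2 k q2.
Proof. induction k; intro H; simpl; auto. destruct (H k) as [-> ->]; [lia|]. rewrite IHk; [reflexivity|]. intros; apply H; lia. Qed.

Section MAIN.
Variable k : nat.
Variable G : kgraph_data.
Hypothesis HG : is_finite_kgraph k G.
Hypothesis Hirr : forall i, (i < k)%nat -> irreducible (coord_mat G i).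
Variable y : Mor G -> R.
Variable beta : R.
Hypothesis Hy : is_Rplus_functor y.

Definition Ew (l : Mor G) : R := exp (- beta * y l).
Lemma E_pos l : 0 < Ew l. Proof. apply exp_pos. Qed.
Lemma E_comp a b : src a = rng b -> Ew (comp a b) = Ew a * Ew b.
Proof. intro H. unfold Ew. destruct Hy as (_ & _ & Hc). rewrite Hc by auto. rewrite <- exp_plus. f_equal. ring. Qed.
Lemma E_idm v : Ew (idm v) = 1.
Proof. unfold Ew. destruct Hy as (_ & Hi & _). rewrite Hi. rewrite Rmult_0_r. apply exp_0. Qed.

Lemma isNk_unit i : (i < k)%nat -> isNk k (unitN i).
Proof. intros H j Hj. unfold unitN. destruct (Nat.eqb_spec j i); [lia|auto]. Qed.

Lemma inVW_iff v w (l : Mor G) : inVW v w l = true <-> rng l = v /\ src l = w.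
Proof. unfold inVW. destruct (obj_eq_dec (rng l) v); destruct (obj_eq_dec (src l) w); split; intros; try tauto; discriminate. Qed.

Lemma Hedge : forall (w : Obj G) i, (i < k)%nat -> exists e : Mor G, rng e = w /\ forall j, deg e j = unitN i j.
Proof. intros w i Hi. destruct (Hirr i Hi w w) as [n [Hn Hp]]. destruct n; [lia|]. simpl in Hp. unfold mmul, sumV in Hp.
  destruct (lsum_pos_inv _ _ Hp) as [u [_ Hu]].
  assert (Hc : 0 < coord_mat G i w u).
  { destruct (Rlt_le_dec 0 (coord_mat G i w u)); auto. exfalso. unfold coord_mat in r.
    pose proof (pos_INR (length (filter (inVW w u) (paths (unitN i))))).
    assert (coord_mat G i w u = 0) by (unfold coord_mat; lra). rewrite H0 in Hu. lra. }
  unfold coord_mat in Hc. destruct (filter (inVW w u) (paths (unitN i))) as [|e l] eqn:Ef; [simpl in Hc; lra|].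
  assert (He : In e (filter (inVW w u) (paths (unitN i)))) by (rewrite Ef; simpl; auto).
  apply filter_In in He. destruct He as [He Hv]. apply inVW_iff in Hv. exists e. split; [tauto|].
  apply (paths_in k G HG); auto. apply isNk_unit; auto. Qed.

Definition BB (i : nat) := Bmat G y beta i.

Lemma Bmat_mv i xi v : (i < k)%nat -> mv (Obj G) verts (BB i) xi v = PS G (unitN i) v (fun l => Ew l * xi (src l)).
Proof. intro Hi. unfold mv, BB, Bmat, PS. 
  transitivity (lsum verts (fun w => lsum (paths (unitN i)) (fun l => (if dec (rng l = v) then (if dec (src l = w) then Ew l else 0) else 0) * xi w))).
  { apply lsum_ext. intros w _. fold (lsum (filter (inVW v w) (paths (unitN i))) (fun lam => exp (- beta * y lam))).
    rewrite lsum_filter, <- lsum_scalr. apply lsum_ext. intros l _.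
    destruct (inVW v w l) eqn:Ev.
    - apply inVW_iff in Ev. destruct Ev as [-> ->]. rewrite !dec_t by auto. reflexivity.
    - destruct (dec (rng l = v)) eqn:E1; [|ring]. destruct (dec (src l = w)) eqn:E2; [|ring].
      apply dec_true in E1, E2. assert (inVW v w l = true) by (apply inVW_iff; auto). congruence. }
  rewrite lsum_swap, lsum_filter. apply lsum_ext. intros l _. destruct (dec (rng l = v)).
  - rewrite <- (lsum_delta verts (src l) (fun w => Ew l * xi w) (verts_nodup k G HG) (verts_all k G HG _)).
    apply lsum_ext. intros w _. destruct (dec (src l = w)); ring.
  - rewrite (lsum_ext _ _ (fun _ => 0)); [apply lsum_zero|intros; ring]. Qed.

Lemma PS_scal n v c h : PS G n v (fun l => c * h l) = c * PS G n v h.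
Proof. unfold PS. apply lsum_scal. Qed.

Lemma BB_comm i j xi v : (i < k)%nat -> (j < k)%nat ->
  mv (Obj G) verts (BB i) (mv (Obj G) verts (BB j) xi) v = mv (Obj G) verts (BB j) (mv (Obj G) verts (BB i) xi) v.
Proof. intros Hi Hj.
  assert (gen : forall a b, (a < k)%nat -> (b < k)%nat ->
     mv (Obj G) verts (BB a) (mv (Obj G) verts (BB b) xi) v = PS G (addN (unitN a) (unitN b)) v (fun l => Ew l * xi (src l))).
  { intros a b Ha Hb. rewrite Bmat_mv by auto. rewrite (PS_add k G HG) by (apply isNk_unit; auto).
    apply (PS_ext k G HG); [apply isNk_unit; auto|]. intros eta _ _. rewrite Bmat_mv by auto. rewrite <- PS_scal.
    apply (PS_ext k G HG); [apply isNk_unit; auto|]. intros nu _ Hr. rewrite E_comp, (comp_src k G HG) by auto. ring. }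
  rewrite !gen by auto. f_equal. apply functional_extensionality. intro. unfold addN. lia. Qed.

End MAIN.

Section EIG.
Variable k : nat.
Variable G : kgraph_data.
Hypothesis HG : is_finite_kgraph k G.
Hypothesis Hirr : forall i, (i < k)%nat -> irreducible (coord_mat G i).
Variable y : Mor G -> R.
Variable beta : R.
Hypothesis Hy : is_Rplus_functor y.
Variable rho : nat -> R.
Hypothesis Hrho : forall i, (i < k)%nat -> is_spectral_radius (Bmat G y beta i) (rho i).
Hypothesis Hk : (0 < k)%nat.
Variable v0 : Obj G.

Notation MV := (mv (Obj G) (@verts G)).
Notation BB := (BB G y beta).
Notation E := (Ew G y beta).

Lemma MV_ext M x x' v : (forall u, x u = x' u) -> MV M x v = MV M x' v.
Proof. intro H. unfold mv. apply lsum_ext. intros. rewrite H. auto. Qed.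

Lemma BB_nonneg i u w : 0 <= BB i u w.
Proof. unfold BB, Bmat. apply (lsum_nonneg _ (fun lam => exp (- beta * y lam))). intros; apply Rlt_le, exp_pos. Qed.
Lemma coord_nonneg i u w : 0 <= coord_mat G i u w. Proof. unfold coord_mat. apply pos_INR. Qed.
Lemma supp i u w : 0 < coord_mat G i u w <-> 0 < BB i u w.
Proof. unfold coord_mat, BB, Bmat. destruct (filter (inVW u w) (paths (unitN i))) as [|e l].
  - simpl. split; lra.
  - split; intro.
    + fold (lsum (e :: l) (fun lam => exp (- beta * y lam))). apply (lsum_pos _ _ e); [intros; apply Rlt_le, exp_pos|simpl; auto|apply exp_pos].
    + simpl length. apply lt_0_INR. lia. Qed.

Lemma mpow_nonneg (A : mat G) n u w : (forall a b, 0 <= A a b) -> 0 <= mpow A n u w.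
Proof. intro HA. revert u w; induction n; intros u w; simpl.
  - unfold mid. destruct (obj_eq_dec u w); lra.
  - unfold mmul, sumV. apply (lsum_nonneg _ (fun t => A u t * mpow A n t w)). intros; apply Rmult_le_pos; auto. Qed.

Lemma mpow_supp (A C : mat G) n u w : (forall a b, 0 <= A a b) -> (forall a b, 0 <= C a b) ->
  (forall a b, 0 < A a b <-> 0 < C a b) -> (0 < mpow A n u w <-> 0 < mpow C n u w).
Proof. intros HA HC HAC. revert u w; induction n; intros u w; [simpl; tauto|]. simpl. unfold mmul, sumV.
  fold (lsum verts (fun t => A u t * mpow A n t w)). fold (lsum verts (fun t => C u t * mpow C n t w)).
  split; intro H; destruct (lsum_pos_inv _ _ H) as [t [Ht Hp]].
  - apply (lsum_pos _ _ t); auto. { intros; apply Rmult_le_pos; auto; apply mpow_nonneg; auto. }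
    pose proof (HA u t). pose proof (mpow_nonneg A n t w HA).
    assert (0 < A u t) by (destruct (Rle_lt_or_eq_dec _ _ H0) as [?|e]; auto; rewrite <- e in Hp; lra).
    assert (0 < mpow A n t w) by (destruct (Rle_lt_or_eq_dec _ _ H1) as [?|e]; auto; rewrite <- e in Hp; lra).
    apply Rmult_lt_0_compat; [apply HAC|apply IHn]; auto.
  - apply (lsum_pos _ _ t); auto. { intros; apply Rmult_le_pos; auto; apply mpow_nonneg; auto. }
    pose proof (HC u t). pose proof (mpow_nonneg C n t w HC).
    assert (0 < C u t) by (destruct (Rle_lt_or_eq_dec _ _ H0) as [?|e]; auto; rewrite <- e in Hp; lra).
    assert (0 < mpow C n t w) by (destruct (Rle_lt_or_eq_dec _ _ H1) as [?|e]; auto; rewrite <- e in Hp; lra).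
    apply Rmult_lt_0_compat; [apply HAC|apply IHn]; auto. Qed.

Lemma MV_mmul A C x v : MV (mmul A C) x v = MV A (MV C x) v.
Proof. transitivity (lsum verts (fun j => lsum verts (fun u => A v u * C u j * x j))).
  { unfold mv. apply lsum_ext. intros j _. unfold mmul, sumV. fold (lsum (@verts G) (fun u => A v u * C u j)).
    rewrite <- lsum_scalr. apply lsum_ext; intros; ring. }
  unfold mv.
  rewrite lsum_swap. apply lsum_ext. intros u _. rewrite <- lsum_scal. apply lsum_ext; intros; ring. Qed.
Lemma MV_mid x v : MV (mid G) x v = x v.
Proof. unfold mv, mid. rewrite <- (lsum_delta verts v x (verts_nodup k G HG) (verts_all k G HG v)).
  apply lsum_ext. intros u _. destruct (obj_eq_dec v u); destruct (dec (v = u)) eqn:D.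
  - subst; ring. - apply dec_false in D; contradiction. - apply dec_true in D; contradiction. - ring. Qed.

Lemma MV_lin_c M x c v : MV M (fun u => c * x u) v = c * MV M x v.
Proof. unfold mv. rewrite <- lsum_scal. apply lsum_ext; intros; ring. Qed.

Lemma mpow_comm n i x v : (i < k)%nat ->
  MV (mpow (BB 0) n) (MV (BB i) x) v = MV (BB i) (MV (mpow (BB 0) n) x) v.
Proof. intro Hi. revert v; induction n; intro v; simpl.
  - rewrite MV_mid. apply MV_ext. intro; rewrite MV_mid; auto.
  - rewrite !MV_mmul. rewrite (MV_ext _ _ (MV (BB i) (MV (mpow (BB 0) n) x))) by auto.
    rewrite (BB_comm k G HG y beta) by auto. apply MV_ext. intro u. rewrite MV_mmul. auto. Qed.

Definition nf (u w : Obj G) : nat := proj1_sig (constructive_indefinite_description _ (Hirr 0 Hk u w)).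
Lemma nf_pos u w : 0 < mpow (BB 0) (nf u w) u w.
Proof. unfold nf. pose proof (proj2_sig (constructive_indefinite_description _ (Hirr 0 Hk u w))) as [_ Hn].
  apply (mpow_supp (coord_mat G 0) (BB 0)); auto; [apply coord_nonneg|apply BB_nonneg|apply supp]. Qed.

Definition prs : list (Obj G * Obj G) := list_prod verts verts.
Definition PP : mat G := fun u w => lsum prs (fun pr => mpow (BB 0) (nf (fst pr) (snd pr)) u w).
Lemma PP_pos u w : 0 < PP u w.
Proof. unfold PP. apply (lsum_pos _ _ (u, w)); [intros; apply mpow_nonneg, BB_nonneg| |apply nf_pos].
  apply in_prod; apply (verts_all k G HG). Qed.
Lemma MV_PP x v : MV PP x v = lsum prs (fun pr => MV (mpow (BB 0) (nf (fst pr) (snd pr))) x v).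
Proof. unfold mv, PP. transitivity (lsum verts (fun j => lsum prs (fun pr => mpow (BB 0) (nf (fst pr) (snd pr)) v j * x j))).
  { apply lsum_ext; intros; rewrite <- lsum_scalr; auto. }
  apply lsum_swap. Qed.
Lemma PP_comm i x v : (i < k)%nat -> MV PP (MV (BB i) x) v = MV (BB i) (MV PP x) v.
Proof. intro Hi. rewrite MV_PP. rewrite (MV_ext _ _ (fun u => lsum prs (fun pr => MV (mpow (BB 0) (nf (fst pr) (snd pr))) x u)))
    by (intro; apply MV_PP).
  unfold mv at 2. transitivity (lsum prs (fun pr => MV (BB i) (MV (mpow (BB 0) (nf (fst pr) (snd pr))) x) v)).
  { apply lsum_ext. intros. apply mpow_comm; auto. }
  unfold mv at 1. rewrite lsum_swap. apply lsum_ext. intros. rewrite <- lsum_scal. auto. Qed.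

Theorem common_eig : exists xi : Obj G -> R, (forall v, 0 < xi v) /\
  forall i, (i < k)%nat -> 0 < rho i /\ forall v, MV (BB i) xi v = rho i * xi v.
Proof. destruct (PF_pos (Obj G) verts (verts_nodup k G HG) (verts_all k G HG) v0 PP PP_pos) as [xi [r [Hx [Hr Heig]]]].
  exists xi. split; auto. intros i Hi.
  destruct (PF_unique (Obj G) verts (verts_all k G HG) v0 PP xi (MV (BB i) xi) r PP_pos Hx Heig) as [c Hc].
  { intro v. rewrite PP_comm by auto. rewrite (MV_ext _ _ (fun u => r * xi u)) by auto. apply MV_lin_c. }
  assert (Hcp : 0 < c).
  { destruct (Hedge k G HG Hirr v0 i Hi) as [e [Re De]].
    assert (0 < MV (BB i) xi v0).
    { rewrite (Bmat_mv k G HG y beta) by auto. unfold PS. apply (lsum_pos _ _ e).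
      - intros; apply Rlt_le, Rmult_lt_0_compat; [apply E_pos|apply Hx].
      - apply filter_In. split; [apply (paths_in k G HG); [apply isNk_unit; auto|auto]|apply dec_t; auto].
      - apply Rmult_lt_0_compat; [apply E_pos|apply Hx]. }
    rewrite Hc in H. pose proof (Hx v0). nra. }
  assert (Hl : is_lub (fun t => exists a b, eigv (Obj G) verts (BB i) a b /\ t = sqrt (a ^ 2 + b ^ 2)) c).
  { apply (spectral_char verts (BB i) xi c v0 (verts_all k G HG)); auto; [apply BB_nonneg|lra]. }
  assert (c = rho i) by (apply (is_lub_u _ _ _ Hl (Hrho i Hi))). subst c. split; auto. Qed.

End EIG.


Section FINAL.
Variable k : nat.
Variable G : kgraph_data.
Hypothesis HG : is_finite_kgraph k G.
Ltac pdeg H Hn := let H' := fresh in pose proof (proj1 (paths_in k G HG _ _ Hn) H) as H'; clear H; rename H' into H.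
Hypothesis Hirr : forall i, (i < k)%nat -> irreducible (coord_mat G i).
Variable y : Mor G -> R.
Variable beta : R.
Hypothesis Hy : is_Rplus_functor y.
Variable rho : nat -> R.
Variable xi : Obj G -> R.
Hypothesis Hxi : forall v, 0 < xi v.
Hypothesis Hc : forall i, (i < k)%nat -> 0 < rho i /\ forall v, mv (Obj G) verts (BB G y beta i) xi v = rho i * xi v.

Notation E := (Ew G y beta).
Definition Wt (l : Mor G) : R := E l * xi (src l).
Lemma Wt_pos l : 0 < Wt l. Proof. apply Rmult_lt_0_compat; [apply E_pos|apply Hxi]. Qed.

Lemma PS_zero q w h : (forall i, q i = 0%nat) -> PS G q w h = h (idm w).
Proof. intro Hq. assert (Hn : isNk k q) by (intros i _; auto).
  unfold PS. rewrite (lsum_bij (idm w :: nil) _ (fun x => x)).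
  - rewrite lsum_cons, lsum_nil. ring.
  - constructor; [simpl; tauto|constructor].
  - apply NoDup_filter, (paths_nodup k G HG); auto.
  - intros a b Ha Hb _. destruct Ha as [<-|[]]. destruct Hb as [<-|[]]. auto.
  - intros a [<-|[]]. apply filter_In. split; [apply (paths_in k G HG); auto; intro i; rewrite (deg_idm k G HG), Hq; auto|].
    apply dec_t. apply (idm_rng k G HG).
  - intros l Hl. apply filter_In in Hl. destruct Hl as [Hl Hr]. apply dec_true in Hr. pdeg Hl Hn.
    exists l. split; auto. left. rewrite (deg0_idm k G HG l); [rewrite Hr; auto|]. intro i; rewrite Hl; auto. Qed.

Lemma Jq_all0 q j : (forall i, (i < j)%nat -> q i = 0%nat) -> Jq q j = 0%nat.
Proof. induction j; intro H; simpl; auto. rewrite IHj by (intros; apply H; lia). rewrite H by lia. auto. Qed.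
Lemma Jq_add a b j : Jq (addN a b) j = (Jq a j + Jq b j)%nat.
Proof. induction j; simpl; auto. rewrite IHj. unfold addN. lia. Qed.
Lemma Jq_unit i j : Jq (unitN i) j = if Nat.ltb i j then 1%nat else 0%nat.
Proof. induction j; simpl; auto. rewrite IHj. unfold unitN. destruct (Nat.eqb_spec j i), (Nat.ltb_spec i j), (Nat.ltb_spec i (S j)); lia. Qed.

Lemma WS_aux N : forall q w, isNk k q -> Jq q k = N -> PS G q w Wt = rp rho k q * xi w.
Proof. induction N; intros q w Hq HN.
  - assert (H0 : forall i, q i = 0%nat).
    { intro i. destruct (Nat.ltb_spec i k); [pose proof (Jq_ge q k i H); lia|apply Hq; auto]. }
    rewrite PS_zero by auto. rewrite rp_zero by auto. unfold Wt. rewrite E_idm, (idm_src k G HG) by auto. ring.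
  - destruct (classic (exists i, (i < k)%nat /\ (0 < q i)%nat)) as [[i [Hi Hqi]]|Hn].
    2:{ exfalso. rewrite Jq_all0 in HN; [lia|]. intros i Hi. destruct (Nat.eq_dec (q i) 0); auto. exfalso; apply Hn; exists i; split; auto; lia. }
    set (q' := fun j => (q j - unitN i j)%nat).
    assert (Eq : q = addN q' (unitN i)).
    { apply functional_extensionality. intro j. unfold addN, q', unitN. destruct (Nat.eqb_spec j i); [subst; lia|lia]. }
    assert (Hq' : isNk k q') by (apply (isNk_sub k); auto; apply isNk_unit; auto).
    assert (HN' : Jq q' k = N). { rewrite Eq, Jq_add, Jq_unit in HN. destruct (Nat.ltb_spec i k); lia. }
    rewrite Eq. rewrite (PS_add k G HG) by (auto; apply isNk_unit; auto).
    rewrite rp_add, rp_unit by auto.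
    transitivity (PS G q' w (fun eta => rho i * Wt eta)).
    + apply (PS_ext k G HG); auto. intros eta _ _. unfold Wt.
      transitivity (E eta * mv (Obj G) verts (BB G y beta i) xi (src eta)).
      * rewrite (Bmat_mv k G HG y beta) by auto. unfold PS. rewrite <- lsum_scal. apply lsum_ext. intros nu Hnu.
        apply filter_In in Hnu. destruct Hnu as [_ Hr]. apply dec_true in Hr.
        rewrite (E_comp G y beta Hy), (comp_src k G HG) by auto. ring.
      * rewrite (proj2 (Hc i Hi)). ring.
    + rewrite PS_scal, IHN by auto. ring. Qed.

Lemma WS q w : isNk k q -> PS G q w Wt = rp rho k q * xi w.
Proof. intro Hq. apply (WS_aux (Jq q k)); auto. Qed.

Lemma inf_split x a b : is_inf_path k G x -> isNk k a -> isNk k b -> leN a b ->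
  x zeroN b = comp (x zeroN a) (x a b) /\ src (x zeroN a) = rng (x a b).
Proof. intros [_ [_ H3]] Ha Hb Hab. destruct (H3 zeroN a b (isNk_zero k) Ha Hb) as [S E0]; auto.
  intro i; unfold zeroN; lia. Qed.
Lemma inf_deg x a b : is_inf_path k G x -> isNk k a -> isNk k b -> leN a b -> forall i, deg (x a b) i = (b i - a i)%nat.
Proof. intros [_ [H2 _]]; auto. Qed.
Lemma inf_pre x a b : is_inf_path k G x -> isNk k a -> isNk k b -> leN a b ->
  pre G a (x zeroN b) = x zeroN a /\ suf G a (x zeroN b) = x a b.
Proof. intros Hx Ha Hb Hab. destruct (inf_split x a b Hx Ha Hb Hab) as [E1 S1]. rewrite E1.
  apply (pre_exact k G HG); auto. intro i. rewrite (inf_deg x zeroN a Hx (isNk_zero k) Ha); [unfold zeroN; lia|].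
  intro j; unfold zeroN; lia. Qed.
Lemma inf_rng x v b : is_inf_path k G x -> x zeroN zeroN = idm v -> isNk k b -> rng (x zeroN b) = v.
Proof. intros Hx H0 Hb. destruct (inf_split x zeroN b Hx (isNk_zero k) Hb) as [E1 S1]; [intro; unfold zeroN; lia|].
  rewrite E1, (comp_rng k G HG), H0 by auto. apply (idm_rng k G HG). Qed.

Section PER.
Variable v : Obj G.
Variables m n : nat -> nat.
Hypothesis Hm : isNk k m.
Hypothesis Hn : isNk k n.
Hypothesis Hper : shift_eq_on k G v m n.
Variables al ga : Mor G.
Definition pp := addN m n.
Definition Cond (om : Mor G) : Prop := pre G m om = al /\ pre G n om = ga.
Definition AL (N : nat -> nat) := filter (fun om => dec (Cond om)) (filter (fun l => dec (rng l = v)) (paths N)).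

Lemma pp_isNk : isNk k pp. Proof. apply isNk_add; auto. Qed.

Lemma mem_char a : (a = m \/ a = n) -> forall tau,
  In tau (map (suf G a) (AL (addN pp a))) <->
  exists x, is_inf_path k G x /\ x zeroN zeroN = idm v /\ x zeroN m = al /\ x zeroN n = ga /\ x a (addN pp a) = tau.
Proof. intros Ha tau. assert (HaN : isNk k a) by (destruct Ha; subst; auto).
  set (N := addN pp a). assert (HN : isNk k N) by (apply isNk_add; auto; apply pp_isNk).
  assert (HmN : leN m N) by (intro i; unfold N, pp, addN; lia).
  assert (HnN : leN n N) by (intro i; unfold N, pp, addN; lia).
  assert (HaN' : leN a N) by (intro i; unfold N, pp, addN; lia).
  split.
  - intro H. apply in_map_iff in H. destruct H as [om [<- Hom]]. unfold AL in Hom. apply filter_In in Hom.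
    destruct Hom as [Hom Hc1]. apply filter_In in Hom. destruct Hom as [Hom Hr]. apply dec_true in Hc1, Hr.
    pdeg Hom HN. assert (Ed : deg om = N) by (apply functional_extensionality; auto).
    set (x := xpath k G HG (Hedge k G HG Hirr) om). exists x.
    destruct (xpath_start k G HG (Hedge k G HG Hirr) om) as [X1 X2]. fold x in X1, X2. rewrite Ed in X1.
    assert (Hx : is_inf_path k G x) by apply xpath_inf.
    destruct Hc1 as [C1 C2].
    split; auto. split; [rewrite X2, Hr; auto|].
    rewrite <- X1 in C1, C2 |- *.
    rewrite (proj1 (inf_pre x m N Hx Hm HN HmN)) in C1. rewrite (proj1 (inf_pre x n N Hx Hn HN HnN)) in C2.
    split; auto. split; auto. rewrite (proj2 (inf_pre x a N Hx HaN HN HaN')). auto.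
  - intros [x [Hx [X0 [Xm [Xn Xa]]]]]. apply in_map_iff. exists (x zeroN N). split.
    + rewrite (proj2 (inf_pre x a N Hx HaN HN HaN')). auto.
    + unfold AL. apply filter_In. split; [apply filter_In; split|].
      * apply (paths_in k G HG); auto. intro i. rewrite (inf_deg x zeroN N Hx (isNk_zero k) HN); [unfold zeroN; lia|].
        intro; unfold zeroN; lia.
      * apply dec_t. apply (inf_rng x v N Hx X0 HN).
      * apply dec_t. split.
        -- rewrite (proj1 (inf_pre x m N Hx Hm HN HmN)). auto.
        -- rewrite (proj1 (inf_pre x n N Hx Hn HN HnN)). auto. Qed.

Lemma AL_pre a (Ha : a = m \/ a = n) N om : In om (AL N) -> pre G a om = (if dec (a = m) then al else ga).
Proof. intro H. unfold AL in H. apply filter_In in H. destruct H as [_ H]. apply dec_true in H. destruct H as [H1 H2].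
  destruct (dec (a = m)) eqn:D; [apply dec_true in D; subst; auto|apply dec_false in D; destruct Ha; [contradiction|subst; auto]]. Qed.

Lemma AL_nodup a (Ha : a = m \/ a = n) : NoDup (map (suf G a) (AL (addN pp a))).
Proof. assert (HaN : isNk k a) by (destruct Ha; subst; auto).
  set (N := addN pp a). assert (HN : isNk k N) by (apply isNk_add; auto; apply pp_isNk).
  apply FinFun.Injective_map_NoDup_in.
  - intros o1 o2 H1 H2 E12.
    assert (D1 : forall o, In o (AL N) -> forall i, (a i <= deg o i)%nat).
    { intros o Ho i. unfold AL in Ho. apply filter_In in Ho. destruct Ho as [Ho _]. apply filter_In in Ho. destruct Ho as [Ho _].
      pdeg Ho HN. rewrite Ho. unfold N, addN; lia. }
    destruct (pre_suf k G HG a o1 HaN (D1 o1 H1)) as (_ & L1 & _).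
    destruct (pre_suf k G HG a o2 HaN (D1 o2 H2)) as (_ & L2 & _).
    rewrite L1, L2, E12, (AL_pre a Ha N o1 H1), (AL_pre a Ha N o2 H2). auto.
  - unfold AL. apply NoDup_filter, NoDup_filter, (paths_nodup k G HG); auto. Qed.

Lemma per_use x : is_inf_path k G x -> x zeroN zeroN = idm v -> x m (addN pp m) = x n (addN pp n).
Proof. intros Hx H0. pose proof (Hper x Hx H0 zeroN pp (isNk_zero k) pp_isNk) as H. 
  assert (leN zeroN pp) by (intro; unfold zeroN; lia). specialize (H H1). exact H. Qed.

Lemma lists_perm : Permutation (map (suf G m) (AL (addN pp m))) (map (suf G n) (AL (addN pp n))).
Proof. apply NoDup_Permutation; [apply AL_nodup; auto|apply AL_nodup; auto|].
  intro tau. rewrite (mem_char m (or_introl eq_refl)), (mem_char n (or_intror eq_refl)).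
  split; intros [x [Hx [X0 [Xm [Xn Xa]]]]]; exists x.
  - split; [auto|split; [auto|split; [auto|split; [auto|]]]]. rewrite <- Xa. symmetry. apply per_use; auto.
  - split; [auto|split; [auto|split; [auto|split; [auto|]]]]. rewrite <- Xa. apply per_use; auto. Qed.

Definition SumA (N : nat -> nat) := lsum (AL N) Wt.

Lemma SumA_fact a (Ha : a = m \/ a = n) :
  SumA (addN pp a) = E (if dec (a = m) then al else ga) * lsum (map (suf G a) (AL (addN pp a))) Wt.
Proof. assert (HaN : isNk k a) by (destruct Ha; subst; auto).
  set (N := addN pp a). assert (HN : isNk k N) by (apply isNk_add; auto; apply pp_isNk).
  unfold SumA. rewrite lsum_map, <- lsum_scal. apply lsum_ext. intros o Ho.
  assert (D1 : forall i, (a i <= deg o i)%nat).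
  { intros i. unfold AL in Ho. apply filter_In in Ho. destruct Ho as [Ho _]. apply filter_In in Ho. destruct Ho as [Ho _].
    pdeg Ho HN. rewrite Ho. unfold N, addN; lia. }
  destruct (pre_suf k G HG a o HaN D1) as (S1 & L1 & _).
  rewrite <- (AL_pre a Ha N o Ho). unfold Wt. rewrite L1 at 1 2. rewrite (E_comp G y beta Hy), (comp_src k G HG) by auto. ring. Qed.

Lemma SumA_refine N q : isNk k N -> isNk k q -> leN m N -> leN n N -> SumA (addN N q) = SumA N * rp rho k q.
Proof. intros HN Hq HmN HnN. unfold SumA, AL.
  rewrite (lsum_filter (fun om => dec (Cond om)) (filter _ (paths (addN N q)))).
  rewrite (lsum_filter (fun om => dec (Cond om)) (filter _ (paths N))).
  fold (PS G (addN N q) v (fun om => if dec (Cond om) then Wt om else 0)).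
  fold (PS G N v (fun om => if dec (Cond om) then Wt om else 0)).
  rewrite (PS_add k G HG) by auto.
  transitivity (PS G N v (fun om => (if dec (Cond om) then Wt om else 0) * rp rho k q)); [|unfold PS; apply lsum_scalr].
  apply (PS_ext k G HG); auto. intros om Hd Hr.
  assert (Hc2 : forall nu, In nu (filter (fun l => dec (rng l = src om)) (paths q)) -> Cond (comp om nu) <-> Cond om).
  { intros nu Hnu. apply filter_In in Hnu. destruct Hnu as [_ Hnu]. apply dec_true in Hnu. unfold Cond.
    rewrite (proj1 (pre_comp k G HG m om nu Hm ltac:(intro i; rewrite Hd; apply HmN) (eq_sym Hnu))).
    rewrite (proj1 (pre_comp k G HG n om nu Hn ltac:(intro i; rewrite Hd; apply HnN) (eq_sym Hnu))). tauto. }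
  destruct (dec (Cond om)) eqn:D.
  - apply dec_true in D. transitivity (PS G q (src om) (fun nu => E om * Wt nu)).
    + unfold PS. apply lsum_ext. intros nu Hnu. rewrite dec_t by (apply Hc2; auto). unfold Wt.
      apply filter_In in Hnu. destruct Hnu as [_ Hnu]. apply dec_true in Hnu.
      rewrite (E_comp G y beta Hy), (comp_src k G HG) by auto. ring.
    + rewrite PS_scal, WS by auto. unfold Wt. ring.
  - apply dec_false in D. transitivity (PS G q (src om) (fun _ => 0)).
    + unfold PS. apply lsum_ext. intros nu Hnu. rewrite dec_f; auto. intro C; apply D; apply (proj1 (Hc2 nu Hnu)); auto.
    + unfold PS. rewrite lsum_zero. ring. Qed.

End PER.

Lemma periodic_eq (Hb : 0 < beta)
  (Hf : forall lam nu : Mor G, y lam + / beta * ln (rho_pow k rho (deg lam)) = y nu + / beta * ln (rho_pow k rho (deg nu)) ->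
           forall i, deg lam i = deg nu i)
  v m n (Hm : isNk k m) (Hn : isNk k n) (Hper : shift_eq_on k G v m n) : forall i, m i = n i.
Proof. destruct (classic (m = n)) as [->|Hne]; [auto|].
  set (x0 := xpath k G HG (Hedge k G HG Hirr) (idm v)).
  assert (Hx0 : is_inf_path k G x0) by apply xpath_inf.
  assert (X0 : x0 zeroN zeroN = idm v).
  { destruct (xpath_start k G HG (Hedge k G HG Hirr) (idm v)) as [_ H]. fold x0 in H. rewrite H, (idm_rng k G HG). auto. }
  set (al := x0 zeroN m). set (ga := x0 zeroN n).
  set (P := pp m n).
  assert (HP : isNk k P) by (apply isNk_add; auto).
  set (Sm := lsum (map (suf G m) (AL v m n al ga (addN P m))) Wt).
  set (Sn := lsum (map (suf G n) (AL v m n al ga (addN P n))) Wt).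
  assert (ES : Sm = Sn) by (apply lsum_perm, (lists_perm v m n Hm Hn Hper al ga)).
  assert (F1 := SumA_fact v m n Hm Hn al ga m (or_introl eq_refl)).
  assert (F2 := SumA_fact v m n Hm Hn al ga n (or_intror eq_refl)).
  rewrite dec_t in F1 by auto. rewrite dec_f in F2 by (intro; apply Hne; auto).
  fold P Sm in F1. fold P Sn in F2.
  assert (R1 := SumA_refine v m n Hm Hn al ga (addN P m) n (isNk_add k _ _ HP Hm) Hn
                  ltac:(intro i; unfold P, pp, addN; lia) ltac:(intro i; unfold P, pp, addN; lia)).
  assert (R2 := SumA_refine v m n Hm Hn al ga (addN P n) m (isNk_add k _ _ HP Hn) Hm
                  ltac:(intro i; unfold P, pp, addN; lia) ltac:(intro i; unfold P, pp, addN; lia)).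
  assert (EN : addN (addN P m) n = addN (addN P n) m) by (apply functional_extensionality; intro; unfold addN; lia).
  rewrite EN, R2, F2 in R1. rewrite F1 in R1.
  assert (Spos : 0 < Sm).
  { apply (lsum_pos _ _ (x0 m (addN P m))); [intros; apply Rlt_le, Wt_pos| |apply Wt_pos].
    apply (mem_char v m n Hm Hn al ga m (or_introl eq_refl)). exists x0. split; [auto|split; [auto|split; [reflexivity|split; reflexivity]]]. }
  assert (Hrp : forall q, 0 < rp rho k q) by (intro q; apply rp_pos; intros i Hi; apply (Hc i Hi)).
  assert (EE : E al * rp rho k n = E ga * rp rho k m).
  { rewrite <- ES in R1. apply (Rmult_eq_reg_r Sm); [|lra]. 
    transitivity (E al * Sm * rp rho k n); [ring|]. rewrite <- R1. ring. }
  assert (LE : ln (E al * rp rho k n) = ln (E ga * rp rho k m)) by (rewrite EE; auto).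
  rewrite !ln_mult in LE by (apply E_pos || apply Hrp). unfold Ew in LE. rewrite !ln_exp in LE.
  assert (Hdal : forall i, deg al i = m i).
  { intro i. unfold al. rewrite (inf_deg x0 zeroN m Hx0 (isNk_zero k) Hm); [unfold zeroN; lia|intro; unfold zeroN; lia]. }
  assert (Hdga : forall i, deg ga i = n i).
  { intro i. unfold ga. rewrite (inf_deg x0 zeroN n Hx0 (isNk_zero k) Hn); [unfold zeroN; lia|intro; unfold zeroN; lia]. }
  assert (Hfe : y al + / beta * ln (rho_pow k rho (deg al)) = y ga + / beta * ln (rho_pow k rho (deg ga))).
  { rewrite !rho_pow_rp. rewrite (rp_ext rho rho k (deg al) m), (rp_ext rho rho k (deg ga) n) by (intros; auto).
    assert (beta * y al + ln (rp rho k m) = beta * y ga + ln (rp rho k n)) by nra.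
    apply (Rmult_eq_reg_l beta); [|lra]. rewrite !Rmult_plus_distr_l, <- !Rmult_assoc, Rinv_r, !Rmult_1_l by lra. lra. }
  intro i. pose proof (Hf al ga Hfe i). rewrite Hdal, Hdga in H. auto. Qed.

End FINAL.

Theorem corollary4p11 :
  forall (k : nat) (G : kgraph_data),
    is_finite_kgraph k G ->
    (forall i, (i < k)%nat -> irreducible (coord_mat G i)) ->
    forall (y : Mor G -> R) (beta : R),
      is_Rplus_functor y -> 0 < beta ->
      forall rho : nat -> R,
        (forall i, (i < k)%nat -> is_spectral_radius (Bmat G y beta i) (rho i)) ->
        (forall lam nu : Mor G,
           y lam + / beta * ln (rho_pow k rho (deg lam))
             = y nu + / beta * ln (rho_pow k rho (deg nu)) ->
           forall i, deg lam i = deg nu i) ->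
        aperiodic k G.
Proof. intros k G HG Hirr y beta Hy Hb rho Hrho Hf v z HP. induction HP; intro i.
  - assert (E : m i = n i).
    { destruct (Nat.eq_dec k 0) as [->|Hk].
      - rewrite H, H0 by lia. auto.
      - destruct (common_eig k G HG Hirr y beta Hy rho Hrho ltac:(lia) v) as [xi [Hxi Hc]].
        apply (periodic_eq k G HG Hirr y beta Hy rho xi Hxi Hc Hb Hf v m n H H0 H1). }
    rewrite E. lia.
  - reflexivity.
  - rewrite IHHP1, IHHP2. reflexivity.
  - rewrite IHHP. reflexivity. Qed.
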